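(* Let $h=h(u,v)$ be a smooth function with $h_{uu}h_{vv}\neq 0$ and consider the quasilinear system $$u_t=h_{uv}u_x+h_{vv}v_x,\qquad v_t=h_{uu}u_x+h_{uv}v_x .\tag{S}$$ (1) Let $u=u(x,t)$, $v=v(x,t)$ be a solution of (S) which is nondegenerate on a neighbourhood of a point $(x_0,t_0)$, i.e. $h_{uu}u_x^2-h_{vv}v_x^2\neq 0$ there, and put $u_0=u(x_0,t_0)$, $v_0=v(x_0,t_0)$. Then there exists a function $f=f(u,v)$ defined on a neighbourhood of $(u_0,v_0)$ and satisfying the linear PDE $$h_{uu}f_{vv}=h_{vv}f_{uu}$$ such that, on a sufficiently small neighbourhood of $(x_0,t_0)$, the identities $$x+t\,h_{uv}(u(x,t),v(x,t))=f_{uv}(u(x,t),v(x,t)),\qquad t\,h_{vv}(u(x,t),v(x,t))=f_{vv}(u(x,t),v(x,t))$$ hold. (2) Conversely, let $f=f(u,v)$ be any solution of $h_{uu}f_{vv}=h_{vv}f_{uu}$ defined on a neighbourhood of a point $(u_0,v_0)$, and let $(x_0,t_0)$ satisfy $x_0+t_0h_{uv}(u_0,v_0)=f_{uv}(u_0,v_0)$ and $t_0h_{vv}(u_0,v_0)=f_{vv}(u_0,v_0)$. Assume that $$\det\begin{pmatrix} t_0h_{uuv}-f_{uuv} & t_0h_{uvv}-f_{uvv}\\ t_0h_{uvv}-f_{uvv} & t_0h_{vvv}-f_{vvv}\end{pmatrix}\neq 0,$$ all derivatives evaluated at $(u_0,v_0)$. Then the functions $u=u(x,t)$, $v=v(x,t)$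 locally defined near $(x_0,t_0)$ (with $u(x_0,t_0)=u_0$, $v(x_0,t_0)=v_0$) by the implicit equations $$x+t\,h_{uv}(u,v)=f_{uv}(u,v),\qquad t\,h_{vv}(u,v)=f_{vv}(u,v)$$ satisfy the system (S).
   Context: Subscripts denote partial derivatives, e.g. $h_{uv}=\partial^2h/\partial u\partial v$. *)

(* Defs.v *)
From Stdlib Require Import Reals List.
From Coquelicot Require Import Coquelicot.
Open Scope R_scope.

Definition pu (f : R -> R -> R) : R -> R -> R :=
  fun u v => Derive (fun a => f a v) u.
Definition pv (f : R -> R -> R) : R -> R -> R :=
  fun u v => Derive (fun b => f u b) v.

(* Iterated partial derivative along a word of directions
   (false = first variable, true = second variable). *)
Fixpoint dw (l : list bool) (f : R -> R -> R) : R -> R -> R :=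
  match l with
  | nil => f
  | b :: l' => (if b then pv else pu) (dw l' f)
  end.

Definition smooth_on (D : R -> R -> Prop) (f : R -> R -> R) : Prop :=
  forall (l : list bool) (a b : R), D a b ->
    ex_derive (fun s => dw l f s b) a /\
    ex_derive (fun s => dw l f a s) b /\
    continuity_2d_pt (dw l f) a b.

Definition sq (a b r : R) : R -> R -> Prop :=
  fun x y => Rabs (x - a) < r /\ Rabs (y - b) < r.

Definition open2 (D : R -> R -> Prop) : Prop :=
  forall a b, D a b -> exists e, 0 < e /\ (forall x y, sq a b e x y -> D x y).

Definition solves_S (h u v : R -> R -> R) (x t : R) : Prop :=
  ex_derive (fun y => u y t) x /\ ex_derive (fun s => u x s) t /\
  ex_derive (fun y => v y t) x /\ ex_derive (fun s => v x s) t /\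
  Derive (fun s => u x s) t =
    pv (pu h) (u x t) (v x t) * Derive (fun y => u y t) x
    + pv (pv h) (u x t) (v x t) * Derive (fun y => v y t) x /\
  Derive (fun s => v x s) t =
    pu (pu h) (u x t) (v x t) * Derive (fun y => u y t) x
    + pv (pu h) (u x t) (v x t) * Derive (fun y => v y t) x.

Definition nondeg (h u v : R -> R -> R) (x t : R) : Prop :=
  pu (pu h) (u x t) (v x t) * (Derive (fun y => u y t) x) ^ 2
  - pv (pv h) (u x t) (v x t) * (Derive (fun y => v y t) x) ^ 2 <> 0.

Definition lin_pde (h f : R -> R -> R) (a b : R) : Prop :=
  pu (pu h) a b * pv (pv f) a b = pv (pv h) a b * pu (pu f) a b.

Definition hodo (h f : R -> R -> R) (x t a b : R) : Prop :=
  x + t * pv (pu h) a b = pv (pu f) a b /\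
  t * pv (pv h) a b = pv (pv f) a b.

(* Main.v *)
Require Import Defs.
From Stdlib Require Import Reals Lra Psatz ClassicalEpsilon.
From Coquelicot Require Import Coquelicot.
Open Scope R_scope.


Lemma sq_locally : forall a b r x y, sq a b r x y -> locally_2d (sq a b r) x y.
Proof.
  intros a b r x y [H1 H2].
  assert (Hp : 0 < Rmin (r - Rabs (x - a)) (r - Rabs (y - b))).
  { apply Rmin_glb_lt; lra. }
  exists (mkposreal _ Hp); intros u v Hu Hv; simpl in *.
  assert (Hm1 := Rmin_l (r - Rabs (x - a)) (r - Rabs (y - b))).
  assert (Hm2 := Rmin_r (r - Rabs (x - a)) (r - Rabs (y - b))).
  split.
  - replace (u - a) with ((u - x) + (x - a)) by ring.
    eapply Rle_lt_trans; [apply Rabs_triang|]; lra.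
  - replace (v - b) with ((v - y) + (y - b)) by ring.
    eapply Rle_lt_trans; [apply Rabs_triang|]; lra.
Qed.

Lemma open2_locally : forall D x y, open2 D -> D x y -> locally_2d D x y.
Proof.
  intros D x y HD Hxy. destruct (HD x y Hxy) as [e [He H]].
  exists (mkposreal e He); intros u v Hu Hv; apply H; split; assumption.
Qed.

Lemma open2_sq : forall a b r, open2 (sq a b r).
Proof.
  intros a b r x y H. destruct (sq_locally a b r x y H) as [d Hd].
  exists d; split; [apply cond_pos|]. intros u v [H1 H2]; apply Hd; assumption.
Qed.

Lemma locally_2d_sq : forall P x y, locally_2d P x y ->
  exists e, 0 < e /\ forall u v, sq x y e u v -> P u v.
Proof.
  intros P x y [d Hd]. exists d; split; [apply cond_pos|].
  intros u v [H1 H2]; apply Hd; assumption.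
Qed.

Lemma sq_center : forall a b r, 0 < r -> sq a b r a b.
Proof. intros; unfold sq; rewrite !Rminus_diag, Rabs_R0; lra. Qed.

Lemma sq_mono : forall a b r r' x y, r <= r' -> sq a b r x y -> sq a b r' x y.
Proof. unfold sq; intros; lra. Qed.

Lemma cont2_comp : forall (g p q : R -> R -> R) x y,
  continuity_2d_pt g (p x y) (q x y) -> continuity_2d_pt p x y ->
  continuity_2d_pt q x y ->
  continuity_2d_pt (fun a b => g (p a b) (q a b)) x y.
Proof.
  intros g p q x y Hg Hp Hq eps.
  destruct (Hg eps) as [d Hd].
  destruct (Hp d) as [d1 Hd1]. destruct (Hq d) as [d2 Hd2].
  assert (H0 : 0 < Rmin d1 d2) by (apply Rmin_glb_lt; apply cond_pos).
  exists (mkposreal _ H0); intros u v Hu Hv; simpl in *.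
  apply Hd.
  - apply Hd1; eapply Rlt_le_trans; eauto; first [apply Rmin_l | apply Rmin_r].
  - apply Hd2; eapply Rlt_le_trans; eauto; first [apply Rmin_l | apply Rmin_r].
Qed.

Lemma cont2_swap : forall f x y, continuity_2d_pt f x y ->
  continuity_2d_pt (fun a b => f b a) y x.
Proof.
  intros f x y H eps. destruct (H eps) as [d Hd]. exists d; intros u v Hu Hv.
  apply Hd; assumption.
Qed.

Lemma cont2_1 : forall f x y, continuity_2d_pt f x y -> continuous (fun s => f s y) x.
Proof.
  intros f x y H. apply continuity_pt_filterlim.
  unfold continuity_pt, continue_in, limit1_in, limit_in.
  intros eps Heps. destruct (H (mkposreal _ Heps)) as [d Hd].
  exists d; split; [apply cond_pos|]. intros z [_ Hz]. simpl in *. unfold R_dist in *.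
  apply Hd; [exact Hz| rewrite Rminus_diag, Rabs_R0; apply cond_pos].
Qed.

Lemma cont2_2 : forall f x y, continuity_2d_pt f x y -> continuous (fun s => f x s) y.
Proof.
  intros f x y H. apply (cont2_1 (fun a b => f b a)). apply cont2_swap; exact H.
Qed.

Lemma mvt1 : forall (g : R -> R) a b,
  (forall z, Rmin a b <= z <= Rmax a b -> ex_derive g z) ->
  exists c, Rmin a b <= c <= Rmax a b /\ g b - g a = Derive g c * (b - a).
Proof.
  intros g a b H.
  apply (MVT_gen g a b (Derive g)).
  - intros x Hx. apply Derive_correct, H; lra.
  - intros x Hx. apply continuity_pt_filterlim. apply (ex_derive_continuous g x), H; lra.
Qed.

Lemma Rmin_Rmax_abs : forall a b c, Rmin a b <= c <= Rmax a b -> Rabs (c - a) <= Rabs (b - a).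
Proof.
  intros a b c H. unfold Rmin, Rmax in H. destruct (Rle_dec a b).
  - rewrite (Rabs_right (c - a)) by lra. rewrite (Rabs_right (b - a)) by lra. lra.
  - rewrite (Rabs_left1 (c - a)) by lra. rewrite (Rabs_left1 (b - a)) by lra. lra.
Qed.

Lemma between_abs : forall a a' z c r, Rmin a a' <= z <= Rmax a a' ->
  Rabs (a - c) < r -> Rabs (a' - c) < r -> Rabs (z - c) < r.
Proof.
  intros a a' z c r Hz H1 H2.
  apply Rabs_def2 in H1; apply Rabs_def2 in H2.
  assert (c - r < Rmin a a') by (apply Rmin_glb_lt; lra).
  assert (Rmax a a' < c + r) by (apply Rmax_lub_lt; lra).
  apply Rabs_def1; lra.
Qed.

Lemma increment : forall (F : R -> R -> R) c1 c2 r a b a' b',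
  (forall x y, sq c1 c2 r x y -> ex_derive (fun s => F s y) x /\ ex_derive (fun s => F x s) y) ->
  sq c1 c2 r a b -> sq c1 c2 r a' b' ->
  exists xi eta, Rmin a a' <= xi <= Rmax a a' /\ Rmin b b' <= eta <= Rmax b b' /\
    F a' b' - F a b = pu F xi b' * (a' - a) + pv F a eta * (b' - b).
Proof.
  intros F c1 c2 r a b a' b' HF Ha Ha'.
  destruct (mvt1 (fun s => F s b') a a') as [xi [Hxi Exi]].
  { intros z Hz. destruct Ha as [Ha1 Ha2], Ha' as [Ha1' Ha2'].
    refine (proj1 (HF z b' _)). split; [|assumption].
    exact (between_abs a a' z c1 r Hz Ha1 Ha1'). }
  destruct (mvt1 (fun s => F a s) b b') as [eta [Heta Eeta]].
  { intros z Hz. destruct Ha as [Ha1 Ha2], Ha' as [Ha1' Ha2'].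
    refine (proj2 (HF a z _)). split; [assumption|].
    exact (between_abs b b' z c2 r Hz Ha2 Ha2'). }
  exists xi, eta; split; [|split].
  - assumption.
  - assumption.
  - unfold pu, pv. cbv beta in Exi, Eeta. rewrite <- Exi, <- Eeta. ring.
Qed.

Lemma ex_derive_pt_lim : forall g x, ex_derive g x -> derivable_pt_lim g x (Derive g x).
Proof. intros; apply is_derive_Reals, Derive_correct; assumption. Qed.

Lemma diff_partials : forall f x y,
  locally_2d (fun u v => ex_derive (fun z => f z v) u) x y ->
  continuity_2d_pt (pu f) x y ->
  ex_derive (fun z => f x z) y ->
  differentiable_pt_lim f x y (pu f x y) (pv f x y).
Proof.
  intros f x y [d0 Hd0] Hc Hv eps.
  assert (He2 : 0 < eps / 2) by (destruct eps; simpl; lra).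
  destruct (Hc (mkposreal _ He2)) as [d1 Hd1].
  destruct (ex_derive_pt_lim _ _ Hv (eps/2) He2) as [d2 Hd2].
  assert (Hm : 0 < Rmin d0 (Rmin d1 d2)).
  { repeat apply Rmin_glb_lt; apply cond_pos. }
  exists (mkposreal _ Hm); intros u v Hu Hv'; simpl in Hu, Hv'.
  assert (m1 := Rmin_l d0 (Rmin d1 d2)); assert (m2 := Rmin_r d0 (Rmin d1 d2)).
  assert (m3 := Rmin_l d1 d2); assert (m4 := Rmin_r d1 d2).
  assert (Hu0 : Rabs (u - x) < d0) by lra.
  assert (Hv0 : Rabs (v - y) < d0) by lra.
  assert (Hu1 : Rabs (u - x) < d1) by lra.
  assert (Hv1 : Rabs (v - y) < d1) by lra.
  assert (Hv2 : Rabs (v - y) < d2) by lra.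
  destruct (mvt1 (fun s => f s v) x u) as [xi [Hxi Exi]].
  { intros z Hz. apply Hd0; [|assumption].
    apply Rle_lt_trans with (Rabs (u - x)); [|assumption].
    apply Rmin_Rmax_abs; assumption. }
  assert (Hxi1 : Rabs (xi - x) <= Rabs (u - x)) by (apply Rmin_Rmax_abs; assumption).
  assert (B1 : Rabs (pu f xi v - pu f x y) < eps / 2).
  { apply Hd1; lra. }
  assert (B2 : Rabs (f x v - f x y - pv f x y * (v - y)) <= eps / 2 * Rabs (v - y)).
  { destruct (Req_dec (v - y) 0) as [E|E].
    - replace v with y by lra.
      replace (f x y - f x y - pv f x y * (y - y)) with 0 by ring.
      replace (y - y) with 0 by ring. rewrite Rabs_R0. lra.
    - specialize (Hd2 (v - y) E Hv2). replace (y + (v - y)) with v in Hd2 by ring.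
      replace (f x v - f x y - pv f x y * (v - y)) with
        (((f x v - f x y) / (v - y) - pv f x y) * (v - y)) by (field; exact E).
      rewrite Rabs_mult. apply Rmult_le_compat_r; [apply Rabs_pos|].
      apply Rlt_le; exact Hd2. }
  assert (Eq : f u v - f x y - (pu f x y * (u - x) + pv f x y * (v - y)) =
     (pu f xi v - pu f x y) * (u - x) + (f x v - f x y - pv f x y * (v - y))).
  { cbv beta in Exi. unfold pu.
    replace (f u v - f x y) with ((f u v - f x v) + (f x v - f x y)) by ring.
    rewrite Exi. ring. }
  rewrite Eq. eapply Rle_trans; [apply Rabs_triang|]. rewrite Rabs_mult.
  assert (Hm1 := Rmax_l (Rabs (u - x)) (Rabs (v - y))).
  assert (Hm2 := Rmax_r (Rabs (u - x)) (Rabs (v - y))).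
  assert (Hp := Rabs_pos (u - x)).
  apply Rle_trans with (eps/2 * Rabs (u - x) + eps/2 * Rabs (v - y)).
  - apply Rplus_le_compat; [|exact B2]. apply Rmult_le_compat_r; [exact Hp|lra].
  - simpl. assert (Hep := cond_pos eps). set (M := Rmax (Rabs (u - x)) (Rabs (v - y))) in *.
    apply Rle_trans with (eps/2 * M + eps/2 * M); [|lra].
    apply Rplus_le_compat; apply Rmult_le_compat_l; lra.
Qed.


Definition Cn (n : nat) (D : R -> R -> Prop) (f : R -> R -> R) :=
  forall a b, D a b -> ex_diff_n f n a b.

Definition parts (D : R -> R -> Prop) (f : R -> R -> R) :=
  forall a b, D a b -> ex_derive (fun s => f s b) a /\ ex_derive (fun s => f a s) b.

Lemma ex_derive_Rplus : forall (f g : R -> R) x, ex_derive f x -> ex_derive g x ->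
  ex_derive (fun y => f y + g y) x.
Proof. intros; apply (ex_derive_plus f g x); assumption. Qed.

Lemma Derive_fid : forall x, Derive (fun s => s) x = 1.
Proof. intros; exact (Derive_id x). Qed.

Lemma Cn_0 : forall D f, Cn 0 D f <-> forall a b, D a b -> continuity_2d_pt f a b.
Proof.
  intros D f; split; intros H a b Hab.
  - exact (proj1 (H a b Hab)).
  - split; [exact (H a b Hab)| exact I].
Qed.

Lemma Cn_S : forall n D f, Cn (S n) D f ->
  parts D f /\ Cn n D (pu f) /\ Cn n D (pv f) /\ Cn 0 D f.
Proof.
  intros n D f H; repeat split.
  - exact (proj1 (proj2 (H a b H0))).
  - exact (proj1 (proj2 (proj2 (H a b H0)))).
  - intros a b Hab; exact (proj1 (proj2 (proj2 (proj2 (H a b Hab))))).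
  - intros a b Hab; exact (proj2 (proj2 (proj2 (proj2 (H a b Hab))))).
  - exact (proj1 (H a b H0)).
Qed.

Lemma Cn_le : forall m n D f, (m <= n)%nat -> Cn n D f -> Cn m D f.
Proof. intros m n D f Hmn H a b Hab. eapply ex_diff_n_m; eauto. Qed.

Lemma Cn_cont : forall n D f, Cn n D f -> forall a b, D a b -> continuity_2d_pt f a b.
Proof. intros n D f H a b Hab. destruct n; exact (proj1 (H a b Hab)). Qed.

Lemma Cn_parts : forall n D f, Cn (S n) D f -> parts D f.
Proof. intros n D f H; exact (proj1 (Cn_S n D f H)). Qed.

Lemma Cn_pu : forall n D f, Cn (S n) D f -> Cn n D (pu f).
Proof. intros n D f H; exact (proj1 (proj2 (Cn_S n D f H))). Qed.

Lemma Cn_pv : forall n D f, Cn (S n) D f -> Cn n D (pv f).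
Proof. intros n D f H; exact (proj1 (proj2 (proj2 (Cn_S n D f H)))). Qed.

Lemma Cn_sub : forall n (D D' : R -> R -> Prop) f, (forall a b, D' a b -> D a b) ->
  Cn n D f -> Cn n D' f.
Proof. intros n D D' f HD H a b Hab; apply H, HD, Hab. Qed.

Lemma Cn_ext : forall n D f g, open2 D -> (forall a b, D a b -> f a b = g a b) ->
  Cn n D f -> Cn n D g.
Proof.
  intros n D f g HD E H a b Hab.
  apply ex_diff_n_ext_loc with f; [|apply H, Hab].
  destruct (open2_locally D a b HD Hab) as [d Hd]. exists d; intros u v Hu Hv.
  apply E, Hd; assumption.
Qed.

Lemma parts_diff : forall D f, open2 D -> parts D f ->
  (forall a b, D a b -> continuity_2d_pt (pu f) a b) ->
  forall a b, D a b -> differentiable_pt_lim f a b (pu f a b) (pv f a b).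
Proof.
  intros D f HD Hp Hc a b Hab. apply diff_partials.
  - destruct (open2_locally D a b HD Hab) as [d Hd]. exists d; intros u v Hu Hv.
    exact (proj1 (Hp u v (Hd u v Hu Hv))).
  - apply Hc, Hab.
  - exact (proj2 (Hp a b Hab)).
Qed.

Lemma Cn_S_intro : forall n D f, open2 D -> parts D f ->
  Cn n D (pu f) -> Cn n D (pv f) -> Cn (S n) D f.
Proof.
  intros n D f HD Hp Hu Hv a b Hab. simpl. split; [|split; [|split; [|split]]].
  - apply differentiable_continuity_pt. exists (pu f a b), (pv f a b).
    apply (parts_diff D f HD Hp); [|exact Hab]. apply (Cn_cont n D _ Hu).
  - exact (proj1 (Hp a b Hab)).
  - exact (proj2 (Hp a b Hab)).
  - exact (Hu a b Hab).
  - exact (Hv a b Hab).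
Qed.

Lemma Cn_S_iff : forall n D f, open2 D ->
  Cn (S n) D f <-> (parts D f /\ Cn n D (pu f) /\ Cn n D (pv f)).
Proof.
  intros n D f HD; split.
  - intros H; destruct (Cn_S n D f H) as [H1 [H2 [H3 _]]]; auto.
  - intros [H1 [H2 H3]]; apply Cn_S_intro; auto.
Qed.

Lemma Cn_const : forall n D c, open2 D -> Cn n D (fun _ _ => c).
Proof.
  induction n; intros D c HD.
  - apply Cn_0; intros; apply continuity_2d_pt_const.
  - apply Cn_S_intro; auto.
    + intros a b _; split; apply ex_derive_const.
    + apply Cn_ext with (fun _ _ => 0); auto.
      intros a b _; unfold pu; rewrite Derive_const; reflexivity.
    + apply Cn_ext with (fun _ _ => 0); auto.
      intros a b _; unfold pv; rewrite Derive_const; reflexivity.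
Qed.

Lemma Cn_id1 : forall n D, open2 D -> Cn n D (fun a _ => a).
Proof.
  destruct n; intros D HD.
  - apply Cn_0; intros; apply continuity_2d_pt_id1.
  - apply Cn_S_intro; auto.
    + intros a b _; split; [apply ex_derive_id|apply ex_derive_const].
    + apply Cn_ext with (fun _ _ => 1); [auto| |apply Cn_const; auto].
      intros a b _; unfold pu; rewrite Derive_fid; reflexivity.
    + apply Cn_ext with (fun _ _ => 0); [auto| |apply Cn_const; auto].
      intros a b _; unfold pv; rewrite Derive_const; reflexivity.
Qed.

Lemma Cn_id2 : forall n D, open2 D -> Cn n D (fun _ b => b).
Proof.
  destruct n; intros D HD.
  - apply Cn_0; intros; apply continuity_2d_pt_id2.
  - apply Cn_S_intro; auto.
    + intros a b _; split; [apply ex_derive_const|apply ex_derive_id].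
    + apply Cn_ext with (fun _ _ => 0); [auto| |apply Cn_const; auto].
      intros a b _; unfold pu; rewrite Derive_const; reflexivity.
    + apply Cn_ext with (fun _ _ => 1); [auto| |apply Cn_const; auto].
      intros a b _; unfold pv; rewrite Derive_fid; reflexivity.
Qed.

Lemma Cn_plus : forall n D f g, open2 D -> Cn n D f -> Cn n D g ->
  Cn n D (fun a b => f a b + g a b).
Proof.
  induction n; intros D f g HD Hf Hg.
  - apply Cn_0; intros a b Hab; apply continuity_2d_pt_plus;
      [apply (Cn_cont _ _ _ Hf)|apply (Cn_cont _ _ _ Hg)]; auto.
  - assert (Pf := Cn_parts _ _ _ Hf); assert (Pg := Cn_parts _ _ _ Hg).
    apply Cn_S_intro; auto.
    + intros a b Hab; destruct (Pf a b Hab), (Pg a b Hab); split;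
        apply ex_derive_Rplus; assumption.
    + apply Cn_ext with (fun a b => pu f a b + pu g a b); auto.
      * intros a b Hab; destruct (Pf a b Hab), (Pg a b Hab); unfold pu.
        rewrite Derive_plus; auto.
      * apply IHn; auto; apply Cn_pu; auto.
    + apply Cn_ext with (fun a b => pv f a b + pv g a b); auto.
      * intros a b Hab; destruct (Pf a b Hab), (Pg a b Hab); unfold pv.
        rewrite Derive_plus; auto.
      * apply IHn; auto; apply Cn_pv; auto.
Qed.

Lemma Cn_mult : forall n D f g, open2 D -> Cn n D f -> Cn n D g ->
  Cn n D (fun a b => f a b * g a b).
Proof.
  induction n; intros D f g HD Hf Hg.
  - apply Cn_0; intros a b Hab; apply continuity_2d_pt_mult;
      [apply (Cn_cont _ _ _ Hf)|apply (Cn_cont _ _ _ Hg)]; auto.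
  - assert (Pf := Cn_parts _ _ _ Hf); assert (Pg := Cn_parts _ _ _ Hg).
    assert (Hf' := Cn_le n (S n) D f (le_S _ _ (le_n n)) Hf).
    assert (Hg' := Cn_le n (S n) D g (le_S _ _ (le_n n)) Hg).
    apply Cn_S_intro; auto.
    + intros a b Hab; destruct (Pf a b Hab), (Pg a b Hab); split;
        apply ex_derive_mult; assumption.
    + apply Cn_ext with (fun a b => pu f a b * g a b + f a b * pu g a b); auto.
      * intros a b Hab; destruct (Pf a b Hab), (Pg a b Hab); unfold pu.
        rewrite Derive_mult; auto.
      * apply Cn_plus; auto; apply IHn; auto; apply Cn_pu; auto.
    + apply Cn_ext with (fun a b => pv f a b * g a b + f a b * pv g a b); auto.
      * intros a b Hab; destruct (Pf a b Hab), (Pg a b Hab); unfold pv.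
        rewrite Derive_mult; auto.
      * apply Cn_plus; auto; apply IHn; auto; apply Cn_pv; auto.
Qed.

Lemma Cn_opp : forall n D f, open2 D -> Cn n D f -> Cn n D (fun a b => - f a b).
Proof.
  intros n D f HD Hf. apply Cn_ext with (fun a b => (fun _ _ => -1) a b * f a b); auto.
  - intros; ring.
  - apply Cn_mult; auto; apply Cn_const; auto.
Qed.

Lemma Cn_minus : forall n D f g, open2 D -> Cn n D f -> Cn n D g ->
  Cn n D (fun a b => f a b - g a b).
Proof.
  intros n D f g HD Hf Hg. apply Cn_ext with (fun a b => f a b + (fun a b => - g a b) a b); auto.
  apply Cn_plus; auto; apply Cn_opp; auto.
Qed.

Lemma Cn_inv : forall n D f, open2 D -> (forall a b, D a b -> f a b <> 0) ->
  Cn n D f -> Cn n D (fun a b => / f a b).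
Proof.
  induction n; intros D f HD Hnz Hf.
  - apply Cn_0; intros a b Hab; apply continuity_2d_pt_inv;
      [apply (Cn_cont _ _ _ Hf)|]; auto.
  - assert (Pf := Cn_parts _ _ _ Hf).
    assert (Hf' := Cn_le n (S n) D f (le_S _ _ (le_n n)) Hf).
    assert (Hi := IHn D f HD Hnz Hf').
    apply Cn_S_intro; auto.
    + intros a b Hab; destruct (Pf a b Hab); split;
        apply ex_derive_inv; auto.
    + apply Cn_ext with (fun a b => - (pu f a b * ((fun a b => / f a b) a b * (fun a b => / f a b) a b))); auto.
      * intros a b Hab; destruct (Pf a b Hab); unfold pu.
        rewrite Derive_inv; auto. cbv beta. field; auto.
      * apply Cn_opp; auto; apply Cn_mult; auto; [apply Cn_pu; auto|apply Cn_mult; auto].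
    + apply Cn_ext with (fun a b => - (pv f a b * ((fun a b => / f a b) a b * (fun a b => / f a b) a b))); auto.
      * intros a b Hab; destruct (Pf a b Hab); unfold pv.
        rewrite Derive_inv; auto. cbv beta. change (Derive (f a) b) with (Derive (fun s => f a s) b). field; auto.
      * apply Cn_opp; auto; apply Cn_mult; auto; [apply Cn_pv; auto|apply Cn_mult; auto].
Qed.

Lemma Cn_div : forall n D f g, open2 D -> (forall a b, D a b -> g a b <> 0) ->
  Cn n D f -> Cn n D g -> Cn n D (fun a b => f a b / g a b).
Proof.
  intros. unfold Rdiv. apply Cn_mult with (g := fun a b => / g a b); auto.
  apply Cn_inv; auto.
Qed.

Lemma comp_deriv : forall n D E g p q, open2 E -> Cn (S n) E g ->
  parts D p -> parts D q -> (forall a b, D a b -> E (p a b) (q a b)) ->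
  forall a b, D a b ->
  is_derive (fun s => g (p s b) (q s b)) a
     (pu g (p a b) (q a b) * pu p a b + pv g (p a b) (q a b) * pu q a b) /\
  is_derive (fun s => g (p a s) (q a s)) b
     (pu g (p a b) (q a b) * pv p a b + pv g (p a b) (q a b) * pv q a b).
Proof.
  intros n D E g p q HE Hg Hp Hq Him a b Hab.
  assert (Hd : differentiable_pt_lim g (p a b) (q a b) (pu g (p a b) (q a b)) (pv g (p a b) (q a b))).
  { apply (parts_diff E g HE (Cn_parts _ _ _ Hg)); [|apply Him, Hab].
    apply (Cn_cont n E _ (Cn_pu _ _ _ Hg)). }
  destruct (Hp a b Hab) as [Hp1 Hp2]; destruct (Hq a b Hab) as [Hq1 Hq2].
  split; apply is_derive_Reals.
  - apply (derivable_pt_lim_comp_2d g (fun s => p s b) (fun s => q s b)); [exact Hd| |];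
      apply ex_derive_pt_lim; assumption.
  - apply (derivable_pt_lim_comp_2d g (fun s => p a s) (fun s => q a s)); [exact Hd| |];
      apply ex_derive_pt_lim; assumption.
Qed.

Lemma Cn_comp : forall n D E g p q, open2 D -> open2 E -> Cn n E g ->
  Cn n D p -> Cn n D q -> (forall a b, D a b -> E (p a b) (q a b)) ->
  Cn n D (fun a b => g (p a b) (q a b)).
Proof.
  induction n; intros D E g p q HD HE Hg Hp Hq Him.
  - apply Cn_0; intros a b Hab. apply cont2_comp.
    + apply (Cn_cont _ _ _ Hg), Him, Hab.
    + apply (Cn_cont _ _ _ Hp), Hab.
    + apply (Cn_cont _ _ _ Hq), Hab.
  - assert (Pp := Cn_parts _ _ _ Hp); assert (Pq := Cn_parts _ _ _ Hq).
    assert (Hp' := Cn_le n (S n) D p (le_S _ _ (le_n n)) Hp).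
    assert (Hq' := Cn_le n (S n) D q (le_S _ _ (le_n n)) Hq).
    assert (CD := comp_deriv n D E g p q HE Hg Pp Pq Him).
    apply Cn_S_intro; auto.
    + intros a b Hab; destruct (CD a b Hab) as [H1 H2]; split; eexists; eassumption.
    + apply Cn_ext with (fun a b => (fun a b => pu g (p a b) (q a b)) a b * pu p a b
          + (fun a b => pv g (p a b) (q a b)) a b * pu q a b); auto.
      * intros a b Hab; destruct (CD a b Hab) as [H1 H2].
        symmetry; apply is_derive_unique; exact H1.
      * apply Cn_plus; auto; apply Cn_mult; auto;
          first [apply (IHn D E); auto; first [apply Cn_pu|apply Cn_pv]; auto
                |apply Cn_pu; auto].
    + apply Cn_ext with (fun a b => (fun a b => pu g (p a b) (q a b)) a b * pv p a b
          + (fun a b => pv g (p a b) (q a b)) a b * pv q a b); auto.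
      * intros a b Hab; destruct (CD a b Hab) as [H1 H2].
        symmetry; apply is_derive_unique; exact H2.
      * apply Cn_plus; auto; apply Cn_mult; auto;
          first [apply (IHn D E); auto; first [apply Cn_pu|apply Cn_pv]; auto
                |apply Cn_pv; auto].
Qed.

Lemma dw_app : forall (l : list bool) (b : bool) (f : R -> R -> R), dw l ((if b then pv else pu) f) = dw (l ++ b :: nil) f.
Proof. induction l; intros; simpl; [reflexivity|rewrite IHl; reflexivity]. Qed.

Lemma dw_pu : forall (l : list bool) (f : R -> R -> R), dw l (pu f) = dw (l ++ false :: nil) f.
Proof. intros; exact (dw_app l false f). Qed.
Lemma dw_pv : forall (l : list bool) (f : R -> R -> R), dw l (pv f) = dw (l ++ true :: nil) f.
Proof. intros; exact (dw_app l true f). Qed.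

Lemma smooth_Cn : forall D f, smooth_on D f -> forall n, Cn n D f.
Proof.
  intros D f H n; revert f H; induction n; intros f H a b Hab.
  - split; [exact (proj2 (proj2 (H nil a b Hab)))|exact I].
  - destruct (H nil a b Hab) as [H1 [H2 H3]].
    simpl; split; [exact H3|split; [exact H1|split; [exact H2|split]]].
    + apply IHn; [|exact Hab]. change (smooth_on D (pu f)). intros l x y Hxy.
      rewrite dw_pu. apply H, Hxy.
    + apply IHn; [|exact Hab]. change (smooth_on D (pv f)). intros l x y Hxy.
      rewrite dw_pv. apply H, Hxy.
Qed.

Lemma Cn_smooth : forall D f, (forall n, Cn n D f) -> smooth_on D f.
Proof.
  intros D f H l.
  assert (G : forall n, Cn n D (dw l f)).
  { induction l as [|c l IH]; intros n; simpl; [apply H|].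
    destruct c; [apply (Cn_pv n), IH|apply (Cn_pu n), IH]. }
  intros a b Hab. destruct (G 1%nat a b Hab) as [H1 [H2 [H3 _]]]. auto.
Qed.


Lemma prod_close : forall x x0 y y0 e, 0 <= e <= 1 ->
  Rabs (x - x0) <= e -> Rabs (y - y0) <= e ->
  Rabs (x * y - x0 * y0) <= e * (Rabs x0 + Rabs y0 + 1).
Proof.
  intros x x0 y y0 e He Hx Hy.
  replace (x * y - x0 * y0) with ((x - x0) * (y - y0) + x0 * (y - y0) + (x - x0) * y0) by ring.
  eapply Rle_trans; [apply Rabs_triang|].
  eapply Rle_trans; [apply Rplus_le_compat_r, Rabs_triang|].
  rewrite !Rabs_mult.
  assert (H1 := Rabs_pos x0); assert (H2 := Rabs_pos y0).
  assert (H3 := Rabs_pos (x - x0)); assert (H4 := Rabs_pos (y - y0)).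
  assert (Rabs (x - x0) * Rabs (y - y0) <= e * 1) by (apply Rmult_le_compat; lra).
  assert (Rabs x0 * Rabs (y - y0) <= Rabs x0 * e) by (apply Rmult_le_compat_l; lra).
  assert (Rabs (x - x0) * Rabs y0 <= e * Rabs y0) by (apply Rmult_le_compat_r; lra).
  nra.
Qed.

Definition Kof (J11 J12 J21 J22 : R) := 1 + Rabs J11 + Rabs J12 + Rabs J21 + Rabs J22.

Lemma Kof_pos : forall J11 J12 J21 J22, 1 <= Kof J11 J12 J21 J22.
Proof.
  intros; unfold Kof; assert (H1 := Rabs_pos J11); assert (H2 := Rabs_pos J12);
  assert (H3 := Rabs_pos J21); assert (H4 := Rabs_pos J22); lra.
Qed.

Lemma det_close : forall J11 J12 J21 J22 c11 c12 c21 c22 e, 0 <= e <= 1 ->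
  Rabs (c11 - J11) <= e -> Rabs (c12 - J12) <= e ->
  Rabs (c21 - J21) <= e -> Rabs (c22 - J22) <= e ->
  Rabs ((c11 * c22 - c12 * c21) - (J11 * J22 - J12 * J21)) <= 2 * e * Kof J11 J12 J21 J22.
Proof.
  intros.
  assert (A1 := prod_close c11 J11 c22 J22 e H H0 H3).
  assert (A2 := prod_close c12 J12 c21 J21 e H H1 H2).
  replace ((c11 * c22 - c12 * c21) - (J11 * J22 - J12 * J21)) with
    ((c11 * c22 - J11 * J22) - (c12 * c21 - J12 * J21)) by ring.
  eapply Rle_trans; [apply Rabs_triang|]. rewrite Rabs_Ropp.
  unfold Kof.
  assert (H5 := Rabs_pos J11); assert (H6 := Rabs_pos J12);
  assert (H7 := Rabs_pos J21); assert (H8 := Rabs_pos J22).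
  assert (e * (Rabs J11 + Rabs J22 + 1) <= e * (1 + Rabs J11 + Rabs J12 + Rabs J21 + Rabs J22))
    by (apply Rmult_le_compat_l; lra).
  assert (e * (Rabs J12 + Rabs J21 + 1) <= e * (1 + Rabs J11 + Rabs J12 + Rabs J21 + Rabs J22))
    by (apply Rmult_le_compat_l; lra).
  lra.
Qed.

Lemma c_bound : forall c J e, e <= 1 -> Rabs (c - J) <= e -> Rabs c <= Rabs J + 1.
Proof.
  intros c J e He H. replace c with ((c - J) + J) by ring.
  eapply Rle_trans; [apply Rabs_triang|]. lra.
Qed.

Lemma box_est : forall F1 F2 a0 b0 rho J11 J12 J21 J22 e,
  parts (sq a0 b0 rho) F1 -> parts (sq a0 b0 rho) F2 ->
  (forall a b, sq a0 b0 rho a b ->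
     Rabs (pu F1 a b - J11) <= e /\ Rabs (pv F1 a b - J12) <= e /\
     Rabs (pu F2 a b - J21) <= e /\ Rabs (pv F2 a b - J22) <= e) ->
  forall a b a' b', sq a0 b0 rho a b -> sq a0 b0 rho a' b' ->
  exists c11 c12 c21 c22,
    Rabs (c11 - J11) <= e /\ Rabs (c12 - J12) <= e /\
    Rabs (c21 - J21) <= e /\ Rabs (c22 - J22) <= e /\
    F1 a' b' - F1 a b = c11 * (a' - a) + c12 * (b' - b) /\
    F2 a' b' - F2 a b = c21 * (a' - a) + c22 * (b' - b).
Proof.
  intros F1 F2 a0 b0 rho J11 J12 J21 J22 e P1 P2 Hc a b a' b' Hz Hz'.
  destruct (increment F1 a0 b0 rho a b a' b' P1 Hz Hz') as [x1 [y1 [Hx1 [Hy1 E1]]]].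
  destruct (increment F2 a0 b0 rho a b a' b' P2 Hz Hz') as [x2 [y2 [Hx2 [Hy2 E2]]]].
  destruct Hz as [Hz1 Hz2]; destruct Hz' as [Hz1' Hz2'].
  assert (S1 : sq a0 b0 rho x1 b') by (split; [exact (between_abs a a' x1 a0 rho Hx1 Hz1 Hz1')|exact Hz2']).
  assert (S2 : sq a0 b0 rho a y1) by (split; [exact Hz1|exact (between_abs b b' y1 b0 rho Hy1 Hz2 Hz2')]).
  assert (S3 : sq a0 b0 rho x2 b') by (split; [exact (between_abs a a' x2 a0 rho Hx2 Hz1 Hz1')|exact Hz2']).
  assert (S4 : sq a0 b0 rho a y2) by (split; [exact Hz1|exact (between_abs b b' y2 b0 rho Hy2 Hz2 Hz2')]).
  exists (pu F1 x1 b'), (pv F1 a y1), (pu F2 x2 b'), (pv F2 a y2).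
  destruct (Hc _ _ S1) as [C1 _]. destruct (Hc _ _ S2) as [_ [C2 _]].
  destruct (Hc _ _ S3) as [_ [_ [C3 _]]]. destruct (Hc _ _ S4) as [_ [_ [_ C4]]].
  repeat split; assumption.
Qed.

Lemma ivt_local : forall (f : R -> R) lo hi y, lo <= hi ->
  (forall x, lo <= x <= hi -> continuity_pt f x) ->
  (f lo - y) * (f hi - y) <= 0 -> exists x, lo <= x <= hi /\ f x = y.
Proof.
  intros f lo hi y Hle Hc Hs.
  destruct (Req_dec (f lo) y) as [E|E]; [exists lo; split; [lra|exact E]|].
  destruct (Req_dec (f hi) y) as [E'|E']; [exists hi; split; [lra|exact E']|].
  destruct (Req_dec lo hi) as [El|El].
  { subst hi. assert ((f lo - y) * (f lo - y) > 0).
    { assert (f lo - y <> 0) by lra. nra. }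
    lra. }
  assert (Hlt : lo < hi) by lra.
  destruct (Rlt_dec (f lo) y) as [Hl|Hl].
  - assert (Hh : y < f hi).
    { destruct (Rlt_dec y (f hi)); [assumption|].
      assert (f hi - y < 0) by lra. assert (f lo - y < 0) by lra. nra. }
    destruct (Ranalysis5.IVT_interv (fun x => f x - y) lo hi) as [z [Hz Ez]].
    + intros x Hx. apply continuity_pt_minus; [apply Hc, Hx|apply continuity_pt_const].
      intros u v; reflexivity.
    + exact Hlt.
    + lra.
    + lra.
    + exists z; split; [exact Hz|lra].
  - assert (Hh : f hi < y).
    { destruct (Rlt_dec (f hi) y); [assumption|].
      assert (f hi - y > 0) by lra. assert (f lo - y > 0) by lra. nra. }
    destruct (Ranalysis5.IVT_interv (fun x => y - f x) lo hi) as [z [Hz Ez]].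
    + intros x Hx. apply continuity_pt_minus; [apply continuity_pt_const|apply Hc, Hx].
      intros u v; reflexivity.
    + exact Hlt.
    + lra.
    + lra.
    + exists z; split; [exact Hz|lra].
Qed.

Lemma lip_cont : forall (f : R -> R) x eta C, 0 < eta -> 0 <= C ->
  (forall x', Rabs (x' - x) < eta -> Rabs (f x' - f x) <= C * Rabs (x' - x)) ->
  continuity_pt f x.
Proof.
  intros f x eta C He HC H.
  unfold continuity_pt, continue_in, limit1_in, limit_in; intros eps Heps.
  exists (Rmin eta (eps / (C + 1))); split.
  - apply Rmin_glb_lt; [lra|]. apply Rdiv_lt_0_compat; lra.
  - intros x' [_ Hx']. simpl in *. unfold R_dist in *.
    assert (H1 := Rmin_l eta (eps / (C + 1))); assert (H2 := Rmin_r eta (eps / (C + 1))).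
    assert (Hx1 : Rabs (x' - x) < eta) by lra.
    assert (Hx2 : Rabs (x' - x) < eps / (C + 1)) by lra.
    eapply Rle_lt_trans; [apply H, Hx1|].
    assert (Hp := Rabs_pos (x' - x)).
    assert ((C + 1) * Rabs (x' - x) < eps).
    { apply Rmult_lt_reg_r with (/ (C + 1)). apply Rinv_0_lt_compat; lra.
      replace ((C + 1) * Rabs (x' - x) * / (C + 1)) with (Rabs (x' - x)) by (field; lra).
      exact Hx2. }
    nra.
Qed.


Lemma abs_le : forall x a, Rabs x <= a -> - a <= x /\ x <= a.
Proof. intros x a H; unfold Rabs in H; destruct (Rcase_abs x); split; lra. Qed.

Lemma mat_facts : forall J11 J12 J21 J22 c11 c12 c21 c22 e,
  J11 * J22 - J12 * J21 <> 0 -> 0 < e -> e <= 1 ->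
  e <= Rabs (J11 * J22 - J12 * J21) / (4 * Kof J11 J12 J21 J22) ->
  Rabs (c11 - J11) <= e -> Rabs (c12 - J12) <= e ->
  Rabs (c21 - J21) <= e -> Rabs (c22 - J22) <= e ->
  Rabs (J11 * J22 - J12 * J21) / 2 <= Rabs (c11 * c22 - c12 * c21) /\
  (c11 * c22 - c12 * c21) * (J11 * J22 - J12 * J21) > 0 /\
  Rabs c11 <= Kof J11 J12 J21 J22 /\ Rabs c12 <= Kof J11 J12 J21 J22 /\
  Rabs c21 <= Kof J11 J12 J21 J22 /\ Rabs c22 <= Kof J11 J12 J21 J22.
Proof.
  intros J11 J12 J21 J22 c11 c12 c21 c22 e Hd He0 He1 He H1 H2 H3 H4.
  assert (HK := Kof_pos J11 J12 J21 J22).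
  assert (Hdc := det_close J11 J12 J21 J22 c11 c12 c21 c22 e (conj (Rlt_le _ _ He0) He1) H1 H2 H3 H4).
  set (K := Kof J11 J12 J21 J22) in *.
  set (d0 := J11 * J22 - J12 * J21) in *. set (dc := c11 * c22 - c12 * c21) in *.
  assert (Hb : 2 * e * K <= Rabs d0 / 2).
  { apply Rmult_le_compat_r with (r := 4 * K) in He; [|lra].
    replace (Rabs d0 / (4 * K) * (4 * K)) with (Rabs d0) in He by (field; lra). lra. }
  assert (Hdd : Rabs (dc - d0) <= Rabs d0 / 2) by lra.
  assert (HJ1 := Rabs_pos J11); assert (HJ2 := Rabs_pos J12).
  assert (HJ3 := Rabs_pos J21); assert (HJ4 := Rabs_pos J22).
  assert (B1 := c_bound c11 J11 e He1 H1). assert (B2 := c_bound c12 J12 e He1 H2).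
  assert (B3 := c_bound c21 J21 e He1 H3). assert (B4 := c_bound c22 J22 e He1 H4).
  unfold K, Kof.
  split; [|split; [|repeat split; lra]].
  - apply abs_le in Hdd. destruct (Rcase_abs d0) as [Hn|Hp].
    + rewrite (Rabs_left d0 Hn) in *. rewrite Rabs_left by lra. lra.
    + assert (d0 > 0) by (destruct (Req_dec d0 0); [contradiction|lra]).
      rewrite (Rabs_right d0 Hp) in *. rewrite Rabs_right by lra. lra.
  - apply abs_le in Hdd. destruct (Rcase_abs d0) as [Hn|Hp].
    + rewrite (Rabs_left d0 Hn) in *. nra.
    + assert (d0 > 0) by (destruct (Req_dec d0 0); [contradiction|lra]).
      rewrite (Rabs_right d0 Hp) in *. nra.
Qed.

Lemma row_facts : forall c J e, J <> 0 -> e <= Rabs J / 2 -> Rabs (c - J) <= e ->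
  c * J > 0 /\ Rabs J / 2 <= Rabs c.
Proof.
  intros c J e HJ He H. apply abs_le in H.
  destruct (Rcase_abs J) as [Hn|Hp].
  - rewrite (Rabs_left J Hn) in *. rewrite Rabs_left by lra. split; nra.
  - assert (J > 0) by (destruct (Req_dec J 0); [contradiction|lra]).
    rewrite (Rabs_right J Hp) in *. rewrite Rabs_right by lra. split; nra.
Qed.

Lemma solve_bound : forall c11 c12 c21 c22 w1 w2 d1 d2 Dt K, 0 < Dt -> 0 <= K ->
  Dt / 2 <= Rabs (c11 * c22 - c12 * c21) ->
  Rabs c11 <= K -> Rabs c12 <= K -> Rabs c21 <= K -> Rabs c22 <= K ->
  d1 = c11 * w1 + c12 * w2 -> d2 = c21 * w1 + c22 * w2 ->
  Rabs w1 <= (4 * K / Dt) * Rmax (Rabs d1) (Rabs d2) /\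
  Rabs w2 <= (4 * K / Dt) * Rmax (Rabs d1) (Rabs d2).
Proof.
  intros c11 c12 c21 c22 w1 w2 d1 d2 Dt K HD HK Hdet H1 H2 H3 H4 E1 E2.
  set (dc := c11 * c22 - c12 * c21) in *.
  set (M := Rmax (Rabs d1) (Rabs d2)).
  assert (M1 := Rmax_l (Rabs d1) (Rabs d2)); assert (M2 := Rmax_r (Rabs d1) (Rabs d2)).
  fold M in M1, M2.
  assert (Hd1 := Rabs_pos d1); assert (Hd2 := Rabs_pos d2).
  assert (Hdc : 0 < Rabs dc) by lra.
  assert (G : forall w x y p q, w * dc = p * x - q * y -> Rabs p <= K -> Rabs q <= K ->
                Rabs x <= M -> Rabs y <= M -> Rabs w <= 4 * K / Dt * M).
  { intros w x y p q Ew Hp Hq Hx Hy.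
    assert (Hs : Rabs (p * x - q * y) <= 2 * K * M).
    { unfold Rminus. eapply Rle_trans; [apply Rabs_triang|]. rewrite Rabs_Ropp, !Rabs_mult.
      assert (Rabs p * Rabs x <= K * M) by (apply Rmult_le_compat; try apply Rabs_pos; lra).
      assert (Rabs q * Rabs y <= K * M) by (apply Rmult_le_compat; try apply Rabs_pos; lra).
      lra. }
    rewrite <- Ew, Rabs_mult in Hs.
    assert (Hw := Rabs_pos w).
    assert (Rabs w * (Dt / 2) <= 2 * K * M).
    { eapply Rle_trans; [|exact Hs]. apply Rmult_le_compat_l; lra. }
    apply Rmult_le_reg_r with (Dt / 2); [lra|].
    replace (4 * K / Dt * M * (Dt / 2)) with (2 * K * M) by (field; lra). exact H. }
  split.
  - apply (G w1 d1 d2 c22 c12); auto. rewrite E1, E2. unfold dc; ring.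
  - apply (G w2 d2 d1 c11 c21); auto. rewrite E1, E2. unfold dc; ring.
Qed.


Definition BoxE (F1 F2 : R -> R -> R) a0 b0 rho J11 J12 J21 J22 e :=
  forall a b a' b', sq a0 b0 rho a b -> sq a0 b0 rho a' b' ->
  exists c11 c12 c21 c22,
    Rabs (c11 - J11) <= e /\ Rabs (c12 - J12) <= e /\
    Rabs (c21 - J21) <= e /\ Rabs (c22 - J22) <= e /\
    F1 a' b' - F1 a b = c11 * (a' - a) + c12 * (b' - b) /\
    F2 a' b' - F2 a b = c21 * (a' - a) + c22 * (b' - b).

Lemma ex_derive_cont_pt : forall g x, ex_derive g x -> continuity_pt g x.
Proof. intros g x H. apply continuity_pt_filterlim. apply (ex_derive_continuous g x), H. Qed.

Lemma Rabs_mult_le : forall x y K M, Rabs x <= K -> Rabs y <= M -> Rabs (x * y) <= K * M.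
Proof.
  intros. rewrite Rabs_mult. apply Rmult_le_compat; try apply Rabs_pos; assumption.
Qed.

Lemma div_le_div : forall x K y Y, 0 < x -> x <= K -> 0 <= Y -> Y <= y -> Y * / K <= y * / x.
Proof.
  intros x K y Y Hx HxK HY HYy.
  apply Rle_trans with (Y * / x).
  - apply Rmult_le_compat_l; [lra|]. apply Rinv_le_contravar; lra.
  - apply Rmult_le_compat_r; [apply Rlt_le, Rinv_0_lt_compat; lra|lra].
Qed.

Section Exist.
Variables (F1 F2 : R -> R -> R) (a0 b0 rho J11 J12 J21 J22 e : R).
Hypothesis Hrho : 0 < rho.
Hypothesis HP1 : parts (sq a0 b0 rho) F1.
Hypothesis HJ : J11 <> 0.
Hypothesis Hdet : J11 * J22 - J12 * J21 <> 0.
Hypothesis He0 : 0 < e.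
Hypothesis He1 : e <= 1.
Hypothesis He2 : e <= Rabs (J11 * J22 - J12 * J21) / (4 * Kof J11 J12 J21 J22).
Hypothesis He3 : e <= Rabs J11 / 2.
Hypothesis HB : BoxE F1 F2 a0 b0 rho J11 J12 J21 J22 e.

Let K := Kof J11 J12 J21 J22.
Let Dt := Rabs (J11 * J22 - J12 * J21).
Let m := Rabs J11 / 2.

Lemma K_ge1 : 1 <= K.
Proof. apply Kof_pos. Qed.
Lemma m_pos : 0 < m.
Proof. unfold m. assert (Rabs J11 > 0) by (apply Rabs_pos_lt; exact HJ). lra. Qed.
Lemma m_le_K : m <= K.
Proof.
  unfold m, K, Kof. assert (H1 := Rabs_pos J11); assert (H2 := Rabs_pos J12);
  assert (H3 := Rabs_pos J21); assert (H4 := Rabs_pos J22). lra.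
Qed.
Lemma Dt_pos : 0 < Dt.
Proof. unfold Dt. apply Rabs_pos_lt; exact Hdet. Qed.

Lemma cfacts : forall c11 c12 c21 c22,
  Rabs (c11 - J11) <= e -> Rabs (c12 - J12) <= e ->
  Rabs (c21 - J21) <= e -> Rabs (c22 - J22) <= e ->
  Dt / 2 <= Rabs (c11 * c22 - c12 * c21) /\
  (c11 * c22 - c12 * c21) * (J11 * J22 - J12 * J21) > 0 /\
  Rabs c11 <= K /\ Rabs c12 <= K /\ Rabs c21 <= K /\ Rabs c22 <= K /\
  c11 * J11 > 0 /\ m <= Rabs c11.
Proof.
  intros c11 c12 c21 c22 H1 H2 H3 H4.
  destruct (mat_facts J11 J12 J21 J22 c11 c12 c21 c22 e Hdet He0 He1 He2 H1 H2 H3 H4)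
    as [A1 [A2 [A3 [A4 [A5 A6]]]]].
  destruct (row_facts c11 J11 e HJ He3 H1) as [B1 B2].
  repeat split; assumption.
Qed.

Let delta := rho / 2.
Let d1 := m * delta / (4 * K).
Let d2 := d1 / 2.
Let s1 := m * delta / 4.
Let s2 := Dt * d2 / (4 * K * (1 + K / m)).

Lemma d_facts : 0 < delta /\ delta < rho /\ 0 < d1 /\ d1 <= delta / 4 /\ 0 < d2 /\ d2 < d1
  /\ 0 < s1 /\ 0 < s2.
Proof.
  assert (HK := K_ge1); assert (Hm := m_pos); assert (HmK := m_le_K); assert (HD := Dt_pos).
  unfold s2, s1, d2, d1, delta.
  assert (0 < rho / 2) by lra.
  assert (0 < m * (rho / 2) / (4 * K)) by (apply Rdiv_lt_0_compat; nra).
  assert (m * (rho / 2) / (4 * K) <= rho / 2 / 4).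
  { apply Rmult_le_reg_r with (4 * K); [lra|].
    replace (m * (rho / 2) / (4 * K) * (4 * K)) with (m * (rho / 2)) by (field; lra).
    nra. }
  assert (0 < K / m) by (apply Rdiv_lt_0_compat; lra).
  repeat split; try lra.
  - nra.
  - apply Rdiv_lt_0_compat; [nra|]. nra.
Qed.

Lemma rootA : forall y1 b, Rabs (y1 - F1 a0 b0) < s1 -> Rabs (b - b0) < d1 ->
  exists a, Rabs (a - a0) <= delta /\ F1 a b = y1.
Proof.
  intros y1 b Hy Hb.
  destruct d_facts as [Hde [Hdr [Hd1 [Hd1d _]]]].
  assert (HK := K_ge1); assert (Hm := m_pos); assert (HmK := m_le_K).
  assert (Sp : sq a0 b0 rho a0 b0) by (apply sq_center; lra).
  assert (Sr : sq a0 b0 rho (a0 + delta) b).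
  { split; [replace (a0 + delta - a0) with delta by ring; rewrite Rabs_right; lra|lra]. }
  assert (Sl : sq a0 b0 rho (a0 - delta) b).
  { split; [replace (a0 - delta - a0) with (- delta) by ring; rewrite Rabs_Ropp, Rabs_right; lra|lra]. }
  destruct (HB a0 b0 (a0 + delta) b Sp Sr) as [c11 [c12 [c21 [c22 [H1 [H2 [H3 [H4 [E1 _]]]]]]]]].
  destruct (HB a0 b0 (a0 - delta) b Sp Sl) as [c11' [c12' [c21' [c22' [H1' [H2' [H3' [H4' [E1' _]]]]]]]]].
  destruct (cfacts c11 c12 c21 c22 H1 H2 H3 H4) as [_ [_ [_ [K12 [_ [_ [S11 M11]]]]]]].
  destruct (cfacts c11' c12' c21' c22' H1' H2' H3' H4') as [_ [_ [_ [K12' [_ [_ [S11' M11']]]]]]].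
  assert (Bb : Rabs (b - b0) <= d1) by lra.
  assert (T1 := Rabs_mult_le c12 (b - b0) K d1 K12 Bb).
  assert (T2 := Rabs_mult_le c12' (b - b0) K d1 K12' Bb).
  assert (Kd : K * d1 = m * delta / 4) by (unfold d1; field; lra).
  apply abs_le in T1; apply abs_le in T2. apply Rabs_def2 in Hy.
  assert (Hy' : - s1 <= y1 - F1 a0 b0 <= s1) by lra.
  unfold s1 in Hy'.
  assert (Prod : (F1 (a0 - delta) b - y1) * (F1 (a0 + delta) b - y1) <= 0).
  { replace (F1 (a0 + delta) b - y1) with
      (c11 * delta + c12 * (b - b0) - (y1 - F1 a0 b0)) by
      (replace (a0 + delta - a0) with delta in E1 by ring; replace (b - b0) with (b - b0) by ring; lra).
    replace (F1 (a0 - delta) b - y1) with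
      (- c11' * delta + c12' * (b - b0) - (y1 - F1 a0 b0)) by
      (replace (a0 - delta - a0) with (- delta) in E1' by ring; lra).
    destruct (Rlt_dec 0 J11) as [Jp|Jn].
    - assert (c11 > 0) by nra. assert (c11' > 0) by nra.
      rewrite Rabs_right in M11 by lra. rewrite Rabs_right in M11' by lra.
      assert (c11 * delta >= m * delta) by nra. assert (c11' * delta >= m * delta) by nra.
      assert (0 < m * delta) by nra. nra.
    - assert (J11 < 0) by (destruct (Req_dec J11 0); [contradiction|lra]).
      assert (c11 < 0) by nra. assert (c11' < 0) by nra.
      rewrite Rabs_left in M11 by lra. rewrite Rabs_left in M11' by lra.
      assert (- c11 * delta >= m * delta) by nra. assert (- c11' * delta >= m * delta) by nra.
      assert (0 < m * delta) by nra. nra. }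
  destruct (ivt_local (fun s => F1 s b) (a0 - delta) (a0 + delta) y1) as [a [Ha Ea]].
  - lra.
  - intros x Hx. apply ex_derive_cont_pt. refine (proj1 (HP1 x b _)). split; [|lra].
    apply Rabs_def1; lra.
  - exact Prod.
  - exists a; split; [apply Rabs_le; lra|exact Ea].
Qed.

Definition alpha y1 b := epsilon (inhabits 0) (fun a => Rabs (a - a0) <= delta /\ F1 a b = y1).

Lemma alpha_spec : forall y1 b, Rabs (y1 - F1 a0 b0) < s1 -> Rabs (b - b0) < d1 ->
  Rabs (alpha y1 b - a0) <= delta /\ F1 (alpha y1 b) b = y1.
Proof.
  intros y1 b Hy Hb. unfold alpha. apply epsilon_spec. apply rootA; assumption.
Qed.

Lemma sq_of : forall a b, Rabs (a - a0) <= delta -> Rabs (b - b0) < d1 -> sq a0 b0 rho a b.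
Proof.
  intros a b Ha Hb. destruct d_facts as [Hde [Hdr [Hd1 [Hd1d _]]]]. split; lra.
Qed.

Lemma kdiff : forall y1 b b', Rabs (y1 - F1 a0 b0) < s1 -> Rabs (b - b0) < d1 -> Rabs (b' - b0) < d1 ->
  exists c11 c12 c21 c22,
    Rabs (c11 - J11) <= e /\ Rabs (c12 - J12) <= e /\
    Rabs (c21 - J21) <= e /\ Rabs (c22 - J22) <= e /\
    F2 (alpha y1 b') b' - F2 (alpha y1 b) b = (c11 * c22 - c12 * c21) / c11 * (b' - b).
Proof.
  intros y1 b b' Hy Hb Hb'.
  destruct (alpha_spec y1 b Hy Hb) as [A1 A2].
  destruct (alpha_spec y1 b' Hy Hb') as [A1' A2'].
  destruct (HB _ _ _ _ (sq_of _ _ A1 Hb) (sq_of _ _ A1' Hb'))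
    as [c11 [c12 [c21 [c22 [H1 [H2 [H3 [H4 [E1 E2]]]]]]]]].
  exists c11, c12, c21, c22. repeat split; try assumption.
  destruct (cfacts c11 c12 c21 c22 H1 H2 H3 H4) as [_ [_ [_ [_ [_ [_ [_ M11]]]]]]].
  assert (Hm := m_pos).
  assert (Hc : c11 <> 0) by (intro Z; rewrite Z, Rabs_R0 in M11; lra).
  rewrite A2, A2' in E1.
  set (da := alpha y1 b' - alpha y1 b) in *.
  assert (Eda : da = - c12 * (b' - b) / c11).
  { apply Rmult_eq_reg_l with c11; [|exact Hc]. field_simplify; [|exact Hc]. lra. }
  rewrite E2, Eda. field. exact Hc.
Qed.

Lemma k_cont : forall y1 b, Rabs (y1 - F1 a0 b0) < s1 -> Rabs (b - b0) <= d2 ->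
  continuity_pt (fun s => F2 (alpha y1 s) s) b.
Proof.
  intros y1 b Hy Hb.
  destruct d_facts as [_ [_ [Hd1 [_ [Hd2 [Hd21 _]]]]]].
  assert (HK := K_ge1); assert (Hm := m_pos).
  apply lip_cont with (eta := d1 - d2) (C := 2 * K * K / m).
  - lra.
  - apply Rlt_le, Rdiv_lt_0_compat; nra.
  - intros b' Hb'.
    assert (Hb'0 : Rabs (b' - b0) < d1).
    { replace (b' - b0) with ((b' - b) + (b - b0)) by ring.
      eapply Rle_lt_trans; [apply Rabs_triang|]. lra. }
    destruct (kdiff y1 b b' Hy ltac:(lra) Hb'0) as [c11 [c12 [c21 [c22 [H1 [H2 [H3 [H4 E]]]]]]]].
    rewrite E.
    destruct (cfacts c11 c12 c21 c22 H1 H2 H3 H4) as [_ [_ [K11 [K12 [K21 [K22 [_ M11]]]]]]].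
    assert (Hc : c11 <> 0) by (intro Z; rewrite Z, Rabs_R0 in M11; lra).
    rewrite Rabs_mult. apply Rmult_le_compat_r; [apply Rabs_pos|].
    unfold Rdiv. rewrite Rabs_mult, Rabs_inv.
    assert (Hdc : Rabs (c11 * c22 - c12 * c21) <= 2 * K * K).
    { unfold Rminus. eapply Rle_trans; [apply Rabs_triang|]. rewrite Rabs_Ropp.
      assert (T1 := Rabs_mult_le c11 c22 K K K11 K22).
      assert (T2 := Rabs_mult_le c12 c21 K K K12 K21). lra. }
    assert (Hi : / Rabs c11 <= / m) by (apply Rinv_le_contravar; lra).
    assert (0 <= / Rabs c11) by (apply Rlt_le, Rinv_0_lt_compat; lra).
    apply Rmult_le_compat; try lra; apply Rabs_pos.
Qed.

Lemma exist_main : exists sig, 0 < sig /\ forall y1 y2, sq (F1 a0 b0) (F2 a0 b0) sig y1 y2 ->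
  exists a b, sq a0 b0 rho a b /\ F1 a b = y1 /\ F2 a b = y2.
Proof.
  destruct d_facts as [Hde [Hdr [Hd1 [Hd1d [Hd2 [Hd21 [Hs1 Hs2]]]]]]].
  assert (HK := K_ge1); assert (Hm := m_pos); assert (HD := Dt_pos).
  exists (Rmin s1 s2); split; [apply Rmin_glb_lt; assumption|].
  intros y1 y2 [Hy1 Hy2].
  assert (Ms1 := Rmin_l s1 s2); assert (Ms2 := Rmin_r s1 s2).
  set (sig := Rmin s1 s2) in *.
  assert (Hy1' : Rabs (y1 - F1 a0 b0) < s1) by lra.
  assert (Hb0 : Rabs (b0 - b0) < d1) by (rewrite Rminus_diag, Rabs_R0; lra).
  assert (Hbp : Rabs (b0 + d2 - b0) < d1) by
    (replace (b0 + d2 - b0) with d2 by ring; rewrite Rabs_right; lra).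
  assert (Hbm : Rabs (b0 - d2 - b0) < d1) by
    (replace (b0 - d2 - b0) with (- d2) by ring; rewrite Rabs_Ropp, Rabs_right; lra).
  set (k := fun s => F2 (alpha y1 s) s).
  assert (Slope : forall b', Rabs (b' - b0) < d1 -> exists S,
     k b' - k b0 = S * (b' - b0) /\ Dt / (2 * K) <= Rabs S /\
     S * ((J11 * J22 - J12 * J21) * J11) > 0).
  { intros b' Hb'. destruct (kdiff y1 b0 b' Hy1' Hb0 Hb') as [c11 [c12 [c21 [c22 [H1 [H2 [H3 [H4 E]]]]]]]].
    destruct (cfacts c11 c12 c21 c22 H1 H2 H3 H4) as [D1 [D2 [K11 [_ [_ [_ [S11 M11]]]]]]].
    assert (Hc : c11 <> 0) by (intro Z; rewrite Z, Rabs_R0 in M11; lra).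
    exists ((c11 * c22 - c12 * c21) / c11). split; [exact E|split].
    - unfold Rdiv. rewrite Rabs_mult, Rabs_inv.
      replace (Dt * / (2 * K)) with ((Dt / 2) * / K) by (field; lra).
      apply div_le_div; lra.
    - set (dc := c11 * c22 - c12 * c21) in *. set (d0 := J11 * J22 - J12 * J21) in *.
      replace (dc / c11 * (d0 * J11)) with ((dc * d0) * (c11 * J11) / (c11 * c11)) by (field; exact Hc).
      apply Rdiv_lt_0_compat; [nra|]. nra. }
  destruct (Slope (b0 + d2) Hbp) as [S1 [E1 [A1 P1]]].
  destruct (Slope (b0 - d2) Hbm) as [S2 [E2 [A2 P2]]].
  replace (b0 + d2 - b0) with d2 in E1 by ring.
  replace (b0 - d2 - b0) with (- d2) in E2 by ring.
  destruct (alpha_spec y1 b0 Hy1' Hb0) as [Al0 Al1].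
  assert (Sp : sq a0 b0 rho a0 b0) by (apply sq_center; lra).
  destruct (HB a0 b0 (alpha y1 b0) b0 Sp (sq_of _ _ Al0 Hb0))
    as [c11 [c12 [c21 [c22 [H1 [H2 [H3 [H4 [F1e F2e]]]]]]]]].
  destruct (cfacts c11 c12 c21 c22 H1 H2 H3 H4) as [_ [_ [_ [_ [K21 [_ [_ M11]]]]]]].
  rewrite Al1, Rminus_diag, Rmult_0_r, Rplus_0_r in F1e.
  rewrite Rminus_diag, Rmult_0_r, Rplus_0_r in F2e.
  set (da := alpha y1 b0 - a0) in *.
  assert (Bda : Rabs da * m <= sig).
  { assert (Rabs (c11 * da) = Rabs (y1 - F1 a0 b0)) by (rewrite F1e; reflexivity).
    rewrite Rabs_mult in H. assert (Hp := Rabs_pos da).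
    assert (Rabs c11 * Rabs da >= m * Rabs da) by nra. lra. }
  assert (Bk : Rabs (k b0 - F2 a0 b0) <= K * sig / m).
  { unfold k. rewrite F2e. rewrite Rabs_mult.
    assert (Hp := Rabs_pos da).
    apply Rle_trans with (K * Rabs da); [apply Rmult_le_compat_r; lra|].
    apply Rmult_le_reg_r with m; [lra|].
    replace (K * sig / m * m) with (K * sig) by (field; lra).
    rewrite Rmult_assoc. apply Rmult_le_compat_l; lra. }
  set (w := y2 - k b0).
  assert (Bw : Rabs w <= Dt * d2 / (2 * K) / 2).
  { unfold w. replace (y2 - k b0) with ((y2 - F2 a0 b0) - (k b0 - F2 a0 b0)) by ring.
    unfold Rminus at 1. eapply Rle_trans; [apply Rabs_triang|]. rewrite Rabs_Ropp.
    apply Rle_trans with (s2 * (1 + K / m)).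
    - assert (K * sig / m <= K * s2 / m).
      { unfold Rdiv. apply Rmult_le_compat_r; [apply Rlt_le, Rinv_0_lt_compat; lra|]. nra. }
      replace (s2 * (1 + K / m)) with (s2 + K * s2 / m) by (field; lra). lra.
    - unfold s2. right. field. split; [lra|]. split; [lra|].
      replace (1 + K / m) with ((m + K) / m) by (field; lra).
      intro Z. assert (0 < (m + K) / m) by (apply Rdiv_lt_0_compat; lra). lra. }
  set (T := Dt * d2 / (2 * K)) in *.
  assert (HT1 : T <= Rabs S1 * d2).
  { unfold T. replace (Dt * d2 / (2 * K)) with (Dt / (2 * K) * d2) by (field; lra).
    apply Rmult_le_compat_r; lra. }
  assert (HT2 : T <= Rabs S2 * d2).
  { unfold T. replace (Dt * d2 / (2 * K)) with (Dt / (2 * K) * d2) by (field; lra).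
    apply Rmult_le_compat_r; lra. }
  assert (HT0 : 0 < T) by (unfold T; apply Rdiv_lt_0_compat; nra).
  apply abs_le in Bw.
  assert (Prod : (k (b0 - d2) - y2) * (k (b0 + d2) - y2) <= 0).
  { replace (k (b0 + d2) - y2) with (S1 * d2 - w) by (unfold w; lra).
    replace (k (b0 - d2) - y2) with (- S2 * d2 - w) by (unfold w; lra).
    set (q := (J11 * J22 - J12 * J21) * J11) in *.
    destruct (Rlt_dec 0 q) as [Q|Q].
    - assert (S1 > 0) by nra. assert (S2 > 0) by nra.
      rewrite Rabs_right in HT1, HT2 by lra.
      assert (S1 * d2 - w > 0) by lra. assert (- S2 * d2 - w < 0) by lra. nra.
    - assert (S1 < 0) by nra. assert (S2 < 0) by nra.
      rewrite Rabs_left in HT1, HT2 by lra.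
      assert (S1 * d2 - w < 0) by lra. assert (- S2 * d2 - w > 0) by lra. nra. }
  destruct (ivt_local k (b0 - d2) (b0 + d2) y2) as [bb [Hbb Ebb]].
  - lra.
  - intros x Hx. apply k_cont; [exact Hy1'|]. apply Rabs_le; lra.
  - exact Prod.
  - assert (Hbb' : Rabs (bb - b0) < d1) by (apply Rabs_def1; lra).
    destruct (alpha_spec y1 bb Hy1' Hbb') as [B1 B2].
    exists (alpha y1 bb), bb. split; [apply sq_of; assumption|split; [exact B2|exact Ebb]].
Qed.

End Exist.


Definition IFTprop (F1 F2 : R -> R -> R) a0 b0 r :=
  exists rho sig L, 0 < rho /\ rho <= r /\ 0 < sig /\ 0 <= L /\
  (forall a b a' b', sq a0 b0 rho a b -> sq a0 b0 rho a' b' ->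
     Rabs (a' - a) <= L * Rmax (Rabs (F1 a' b' - F1 a b)) (Rabs (F2 a' b' - F2 a b)) /\
     Rabs (b' - b) <= L * Rmax (Rabs (F1 a' b' - F1 a b)) (Rabs (F2 a' b' - F2 a b))) /\
  (forall y1 y2, sq (F1 a0 b0) (F2 a0 b0) sig y1 y2 ->
     exists a b, sq a0 b0 rho a b /\ F1 a b = y1 /\ F2 a b = y2).

Lemma cont_close : forall f a0 b0 J e, 0 < e -> continuity_2d_pt f a0 b0 -> f a0 b0 = J ->
  exists d, 0 < d /\ forall a b, sq a0 b0 d a b -> Rabs (f a b - J) <= e.
Proof.
  intros f a0 b0 J e He Hc EJ. destruct (Hc (mkposreal e He)) as [d Hd].
  exists d; split; [apply cond_pos|]. intros a b [Ha Hb]. rewrite <- EJ.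
  apply Rlt_le, (Hd a b Ha Hb).
Qed.

Lemma ift_core : forall F1 F2 a0 b0 r, 0 < r ->
  parts (sq a0 b0 r) F1 -> parts (sq a0 b0 r) F2 ->
  continuity_2d_pt (pu F1) a0 b0 -> continuity_2d_pt (pv F1) a0 b0 ->
  continuity_2d_pt (pu F2) a0 b0 -> continuity_2d_pt (pv F2) a0 b0 ->
  pu F1 a0 b0 <> 0 ->
  pu F1 a0 b0 * pv F2 a0 b0 - pv F1 a0 b0 * pu F2 a0 b0 <> 0 ->
  IFTprop F1 F2 a0 b0 r.
Proof.
  intros F1 F2 a0 b0 r Hr P1 P2 C11 C12 C21 C22 HJ Hdet.
  set (J11 := pu F1 a0 b0) in *. set (J12 := pv F1 a0 b0) in *.
  set (J21 := pu F2 a0 b0) in *. set (J22 := pv F2 a0 b0) in *.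
  set (K := Kof J11 J12 J21 J22). assert (HK := Kof_pos J11 J12 J21 J22). fold K in HK.
  set (Dt := Rabs (J11 * J22 - J12 * J21)).
  assert (HD : 0 < Dt) by (apply Rabs_pos_lt; exact Hdet).
  assert (HJa : 0 < Rabs J11) by (apply Rabs_pos_lt; exact HJ).
  set (e := Rmin 1 (Rmin (Dt / (4 * K)) (Rabs J11 / 2))).
  assert (E1 := Rmin_l 1 (Rmin (Dt / (4 * K)) (Rabs J11 / 2))).
  assert (E2 := Rmin_r 1 (Rmin (Dt / (4 * K)) (Rabs J11 / 2))).
  assert (E3 := Rmin_l (Dt / (4 * K)) (Rabs J11 / 2)).
  assert (E4 := Rmin_r (Dt / (4 * K)) (Rabs J11 / 2)).
  fold e in E1, E2.
  assert (He : 0 < e).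
  { unfold e. apply Rmin_glb_lt; [lra|apply Rmin_glb_lt; [apply Rdiv_lt_0_compat; lra|lra]]. }
  destruct (cont_close _ _ _ J11 e He C11 eq_refl) as [d11 [Hd11 B11]].
  destruct (cont_close _ _ _ J12 e He C12 eq_refl) as [d12 [Hd12 B12]].
  destruct (cont_close _ _ _ J21 e He C21 eq_refl) as [d21 [Hd21 B21]].
  destruct (cont_close _ _ _ J22 e He C22 eq_refl) as [d22 [Hd22 B22]].
  set (rho := Rmin r (Rmin (Rmin d11 d12) (Rmin d21 d22))).
  assert (R1 := Rmin_l r (Rmin (Rmin d11 d12) (Rmin d21 d22))).
  assert (R2 := Rmin_r r (Rmin (Rmin d11 d12) (Rmin d21 d22))).
  assert (R3 := Rmin_l (Rmin d11 d12) (Rmin d21 d22)).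
  assert (R4 := Rmin_r (Rmin d11 d12) (Rmin d21 d22)).
  assert (R5 := Rmin_l d11 d12). assert (R6 := Rmin_r d11 d12).
  assert (R7 := Rmin_l d21 d22). assert (R8 := Rmin_r d21 d22).
  fold rho in R1, R2.
  assert (Hrho : 0 < rho).
  { unfold rho. repeat apply Rmin_glb_lt; assumption. }
  assert (P1' : parts (sq a0 b0 rho) F1).
  { intros a b Hab; apply P1. apply (sq_mono a0 b0 rho); [lra|exact Hab]. }
  assert (P2' : parts (sq a0 b0 rho) F2).
  { intros a b Hab; apply P2. apply (sq_mono a0 b0 rho); [lra|exact Hab]. }
  assert (Hclose : forall a b, sq a0 b0 rho a b ->
     Rabs (pu F1 a b - J11) <= e /\ Rabs (pv F1 a b - J12) <= e /\
     Rabs (pu F2 a b - J21) <= e /\ Rabs (pv F2 a b - J22) <= e).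
  { intros a b Hab. repeat split.
    - apply B11, (sq_mono a0 b0 rho); [lra|exact Hab].
    - apply B12, (sq_mono a0 b0 rho); [lra|exact Hab].
    - apply B21, (sq_mono a0 b0 rho); [lra|exact Hab].
    - apply B22, (sq_mono a0 b0 rho); [lra|exact Hab]. }
  assert (HB : BoxE F1 F2 a0 b0 rho J11 J12 J21 J22 e).
  { intros a b a' b' Hz Hz'. exact (box_est F1 F2 a0 b0 rho J11 J12 J21 J22 e P1' P2' Hclose a b a' b' Hz Hz'). }
  assert (He1 : e <= 1) by lra.
  assert (He2 : e <= Dt / (4 * K)) by lra.
  assert (He3 : e <= Rabs J11 / 2) by lra.
  destruct (exist_main F1 F2 a0 b0 rho J11 J12 J21 J22 e Hrho P1' HJ Hdet He He1 He2 He3 HB)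
    as [sig [Hsig Hex]].
  exists rho, sig, (4 * K / Dt). split; [exact Hrho|split; [lra|split; [exact Hsig|split]]].
  - apply Rlt_le, Rdiv_lt_0_compat; lra.
  - split; [|exact Hex].
    intros a b a' b' Hz Hz'.
    destruct (HB a b a' b' Hz Hz') as [c11 [c12 [c21 [c22 [H1 [H2 [H3 [H4 [Eq1 Eq2]]]]]]]]].
    destruct (mat_facts J11 J12 J21 J22 c11 c12 c21 c22 e Hdet He He1 He2 H1 H2 H3 H4)
      as [A1 [_ [A3 [A4 [A5 A6]]]]].
    exact (solve_bound c11 c12 c21 c22 (a' - a) (b' - b) _ _ Dt K HD ltac:(lra) A1 A3 A4 A5 A6 Eq1 Eq2).
Qed.

Lemma ift_gen : forall F1 F2 a0 b0 r, 0 < r ->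
  parts (sq a0 b0 r) F1 -> parts (sq a0 b0 r) F2 ->
  continuity_2d_pt (pu F1) a0 b0 -> continuity_2d_pt (pv F1) a0 b0 ->
  continuity_2d_pt (pu F2) a0 b0 -> continuity_2d_pt (pv F2) a0 b0 ->
  pu F1 a0 b0 * pv F2 a0 b0 - pv F1 a0 b0 * pu F2 a0 b0 <> 0 ->
  IFTprop F1 F2 a0 b0 r.
Proof.
  intros F1 F2 a0 b0 r Hr P1 P2 C11 C12 C21 C22 Hdet.
  destruct (Req_dec (pu F1 a0 b0) 0) as [Z|NZ]; [|apply ift_core; assumption].
  set (G1 := fun x y => F1 y x). set (G2 := fun x y => F2 y x).
  assert (Q1 : parts (sq b0 a0 r) G1).
  { intros x y [Hx Hy]. destruct (P1 y x (conj Hy Hx)) as [A B]. split; assumption. }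
  assert (Q2 : parts (sq b0 a0 r) G2).
  { intros x y [Hx Hy]. destruct (P2 y x (conj Hy Hx)) as [A B]. split; assumption. }
  destruct (ift_core G1 G2 b0 a0 r Hr Q1 Q2
     (cont2_swap _ _ _ C12) (cont2_swap _ _ _ C11) (cont2_swap _ _ _ C22) (cont2_swap _ _ _ C21))
    as [rho [sig [L [H1 [H2 [H3 [H4 [H5 H6]]]]]]]].
  - change (pv F1 a0 b0 <> 0). intro Z'. apply Hdet. rewrite Z, Z'. ring.
  - change (pv F1 a0 b0 * pu F2 a0 b0 - pu F1 a0 b0 * pv F2 a0 b0 <> 0).
    intro Z'. apply Hdet. lra.
  - exists rho, sig, L. do 4 (split; [assumption|]). split.
    + intros a b a' b' [Ha Hb] [Ha' Hb']. split.
      * exact (proj2 (H5 b a b' a' (conj Hb Ha) (conj Hb' Ha'))).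
      * exact (proj1 (H5 b a b' a' (conj Hb Ha) (conj Hb' Ha'))).
    + intros y1 y2 Hy. destruct (H6 y1 y2 Hy) as [x [y [[Hx Hy'] [E1 E2]]]].
      exists y, x. split; [split; assumption|split; assumption].
Qed.


Lemma lin_err : forall J11 J12 J21 J22 e1 e2 w1 w2 h d eps' K Dt,
  d = J11 * J22 - J12 * J21 -> Dt = Rabs d -> 0 < Dt -> K = Kof J11 J12 J21 J22 ->
  Rabs e1 <= 1 -> Rabs e2 <= 1 -> 0 <= eps' -> 4 * K / Dt * eps' <= 1 / 2 ->
  Rabs (h * e1 - (J11 * w1 + J12 * w2)) <= eps' * Rmax (Rabs w1) (Rabs w2) ->
  Rabs (h * e2 - (J21 * w1 + J22 * w2)) <= eps' * Rmax (Rabs w1) (Rabs w2) ->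
  Rabs (w1 * d - (J22 * e1 - J12 * e2) * h) <= 16 * K * K * eps' / Dt * Rabs h /\
  Rabs (w2 * d - (J11 * e2 - J21 * e1) * h) <= 16 * K * K * eps' / Dt * Rabs h.
Proof.
  intros J11 J12 J21 J22 e1 e2 w1 w2 h d eps' K Dt Ed ED HD EK He1 He2 He' Hs Hr1 Hr2.
  assert (HK := Kof_pos J11 J12 J21 J22). rewrite <- EK in HK.
  assert (KJ : Rabs J11 <= K /\ Rabs J12 <= K /\ Rabs J21 <= K /\ Rabs J22 <= K).
  { rewrite EK; unfold Kof. assert (H1 := Rabs_pos J11); assert (H2 := Rabs_pos J12);
    assert (H3 := Rabs_pos J21); assert (H4 := Rabs_pos J22). repeat split; lra. }
  destruct KJ as [K1 [K2 [K3 K4]]].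
  set (M := Rmax (Rabs w1) (Rabs w2)) in *.
  set (r1 := h * e1 - (J11 * w1 + J12 * w2)) in *.
  set (r2 := h * e2 - (J21 * w1 + J22 * w2)) in *.
  assert (HM0 : 0 <= M) by (unfold M; eapply Rle_trans; [apply Rabs_pos|apply Rmax_l]).
  assert (Hh := Rabs_pos h).
  assert (Bd : forall e r, Rabs e <= 1 -> Rabs r <= eps' * M -> Rabs (h * e - r) <= Rabs h + eps' * M).
  { intros e r He Hr. unfold Rminus. eapply Rle_trans; [apply Rabs_triang|].
    rewrite Rabs_Ropp, Rabs_mult. assert (Rabs h * Rabs e <= Rabs h * 1)
      by (apply Rmult_le_compat_l; lra). lra. }
  assert (Sb := solve_bound J11 J12 J21 J22 w1 w2 (h * e1 - r1) (h * e2 - r2) Dt K HD ltac:(lra)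
     ltac:(rewrite <- Ed, <- ED; lra) K1 K2 K3 K4 ltac:(unfold r1; ring) ltac:(unfold r2; ring)).
  assert (Rm : Rmax (Rabs (h * e1 - r1)) (Rabs (h * e2 - r2)) <= Rabs h + eps' * M).
  { apply Rmax_lub; apply Bd; assumption. }
  assert (HLp : 0 <= 4 * K / Dt) by (apply Rlt_le, Rdiv_lt_0_compat; lra).
  assert (BM : M <= 4 * K / Dt * (Rabs h + eps' * M)).
  { unfold M at 1. apply Rmax_lub.
    - eapply Rle_trans; [apply (proj1 Sb)|]. apply Rmult_le_compat_l; assumption.
    - eapply Rle_trans; [apply (proj2 Sb)|]. apply Rmult_le_compat_l; assumption. }
  assert (BM2 : M <= 8 * K / Dt * Rabs h).
  { replace (8 * K / Dt * Rabs h) with (2 * (4 * K / Dt * Rabs h)) by (field; lra).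
    assert (4 * K / Dt * (Rabs h + eps' * M) = 4 * K / Dt * Rabs h + (4 * K / Dt * eps') * M) by ring.
    assert ((4 * K / Dt * eps') * M <= 1/2 * M) by (apply Rmult_le_compat_r; lra).
    lra. }
  assert (G : forall p q s t, Rabs p <= K -> Rabs q <= K -> Rabs s <= eps' * M -> Rabs t <= eps' * M ->
     Rabs (- p * s + q * t) <= 16 * K * K * eps' / Dt * Rabs h).
  { intros p q s t Hp Hq Hs' Ht. eapply Rle_trans; [apply Rabs_triang|].
    rewrite !Rabs_mult, Rabs_Ropp.
    assert (Rabs p * Rabs s <= K * (eps' * M)) by (apply Rmult_le_compat; try apply Rabs_pos; lra).
    assert (Rabs q * Rabs t <= K * (eps' * M)) by (apply Rmult_le_compat; try apply Rabs_pos; lra).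
    assert (K * (eps' * M) <= K * (eps' * (8 * K / Dt * Rabs h))).
    { apply Rmult_le_compat_l; [lra|]. apply Rmult_le_compat_l; lra. }
    replace (16 * K * K * eps' / Dt * Rabs h) with (2 * (K * (eps' * (8 * K / Dt * Rabs h)))) by (field; lra).
    lra. }
  split.
  - replace (w1 * d - (J22 * e1 - J12 * e2) * h) with (- J22 * r1 + J12 * r2)
      by (rewrite Ed; unfold r1, r2; ring).
    apply G; assumption.
  - replace (w2 * d - (J11 * e2 - J21 * e1) * h) with (- J11 * r2 + J21 * r1)
      by (rewrite Ed; unfold r1, r2; ring).
    apply G; assumption.
Qed.

Lemma lin_inv_limit : forall J11 J12 J21 J22 e1 e2 (W1 W2 : R -> R),
  J11 * J22 - J12 * J21 <> 0 -> Rabs e1 <= 1 -> Rabs e2 <= 1 ->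
  (forall eps, 0 < eps -> exists eta, 0 < eta /\ forall h, Rabs h < eta ->
     Rabs (h * e1 - (J11 * W1 h + J12 * W2 h)) <= eps * Rmax (Rabs (W1 h)) (Rabs (W2 h)) /\
     Rabs (h * e2 - (J21 * W1 h + J22 * W2 h)) <= eps * Rmax (Rabs (W1 h)) (Rabs (W2 h))) ->
  forall eps, 0 < eps -> exists eta, 0 < eta /\ forall h, h <> 0 -> Rabs h < eta ->
     Rabs (W1 h / h - (J22 * e1 - J12 * e2) / (J11 * J22 - J12 * J21)) < eps /\
     Rabs (W2 h / h - (J11 * e2 - J21 * e1) / (J11 * J22 - J12 * J21)) < eps.
Proof.
  intros J11 J12 J21 J22 e1 e2 W1 W2 Hd He1 He2 HL eps Heps.
  set (d := J11 * J22 - J12 * J21) in *.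
  set (K := Kof J11 J12 J21 J22). assert (HK := Kof_pos J11 J12 J21 J22). fold K in HK.
  set (Dt := Rabs d). assert (HD : 0 < Dt) by (apply Rabs_pos_lt; exact Hd).
  set (eps' := Rmin (Dt / (8 * K)) (eps * Dt * Dt / (32 * K * K))).
  assert (E1 := Rmin_l (Dt / (8 * K)) (eps * Dt * Dt / (32 * K * K))).
  assert (E2 := Rmin_r (Dt / (8 * K)) (eps * Dt * Dt / (32 * K * K))). fold eps' in E1, E2.
  assert (Hep : 0 < eps').
  { assert (0 < eps * Dt) by nra. assert (0 < eps * Dt * Dt) by nra.
    apply Rmin_glb_lt; apply Rdiv_lt_0_compat; nra. }
  destruct (HL eps' Hep) as [eta [Heta Hh]].
  exists eta; split; [exact Heta|]. intros h Hh0 Hhe.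
  destruct (Hh h Hhe) as [R1 R2].
  assert (S1 : 4 * K / Dt * eps' <= 1 / 2).
  { apply Rle_trans with (4 * K / Dt * (Dt / (8 * K))).
    - apply Rmult_le_compat_l; [apply Rlt_le, Rdiv_lt_0_compat; lra|exact E1].
    - right; field; lra. }
  assert (S2 : 16 * K * K * eps' / Dt <= eps * Dt / 2).
  { apply Rle_trans with (16 * K * K * (eps * Dt * Dt / (32 * K * K)) / Dt).
    - unfold Rdiv. apply Rmult_le_compat_r; [apply Rlt_le, Rinv_0_lt_compat; lra|].
      apply Rmult_le_compat_l; [nra|]. exact E2.
    - right; field; lra. }
  destruct (lin_err J11 J12 J21 J22 e1 e2 (W1 h) (W2 h) h d eps' K Dt eq_refl eq_refl HD eq_refl
     He1 He2 (Rlt_le _ _ Hep) S1 R1 R2) as [L1 L2].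
  assert (Hha : 0 < Rabs h) by (apply Rabs_pos_lt; exact Hh0).
  assert (G : forall w num, Rabs (w * d - num * h) <= 16 * K * K * eps' / Dt * Rabs h ->
            Rabs (w / h - num / d) < eps).
  { intros w num Hw.
    replace (w / h - num / d) with ((w * d - num * h) / (d * h)) by (field; split; assumption).
    unfold Rdiv. rewrite Rabs_mult, Rabs_inv, Rabs_mult. fold Dt.
    apply Rle_lt_trans with ((eps * Dt / 2 * Rabs h) * / (Dt * Rabs h)).
    - apply Rmult_le_compat_r; [apply Rlt_le, Rinv_0_lt_compat; nra|].
      eapply Rle_trans; [exact Hw|]. apply Rmult_le_compat_r; lra.
    - replace (eps * Dt / 2 * Rabs h * / (Dt * Rabs h)) with (eps / 2) by (field; lra). lra. }
  split; apply G; assumption.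
Qed.


Lemma deriv_gen : forall F1 F2 z1 z2 J11 J12 J21 J22 (W1 W2 : R -> R) e1 e2,
  differentiable_pt_lim F1 z1 z2 J11 J12 -> differentiable_pt_lim F2 z1 z2 J21 J22 ->
  J11 * J22 - J12 * J21 <> 0 -> Rabs e1 <= 1 -> Rabs e2 <= 1 ->
  (forall d, 0 < d -> exists eta, 0 < eta /\ forall h, Rabs h < eta ->
     Rabs (W1 h) < d /\ Rabs (W2 h) < d /\
     F1 (z1 + W1 h) (z2 + W2 h) - F1 z1 z2 = h * e1 /\
     F2 (z1 + W1 h) (z2 + W2 h) - F2 z1 z2 = h * e2) ->
  forall eps, 0 < eps -> exists eta, 0 < eta /\ forall h, h <> 0 -> Rabs h < eta ->
     Rabs (W1 h / h - (J22 * e1 - J12 * e2) / (J11 * J22 - J12 * J21)) < eps /\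
     Rabs (W2 h / h - (J11 * e2 - J21 * e1) / (J11 * J22 - J12 * J21)) < eps.
Proof.
  intros F1 F2 z1 z2 J11 J12 J21 J22 W1 W2 e1 e2 D1 D2 Hd He1 He2 HW.
  apply lin_inv_limit; auto.
  intros eps Heps.
  destruct (D1 (mkposreal eps Heps)) as [d1 Hd1].
  destruct (D2 (mkposreal eps Heps)) as [d2 Hd2].
  assert (Hm : 0 < Rmin d1 d2) by (apply Rmin_glb_lt; apply cond_pos).
  destruct (HW _ Hm) as [eta [Heta Hh]].
  exists eta; split; [exact Heta|]. intros h Hhe.
  destruct (Hh h Hhe) as [A1 [A2 [E1 E2]]].
  assert (M1 := Rmin_l d1 d2); assert (M2 := Rmin_r d1 d2).
  assert (U1 : Rabs (z1 + W1 h - z1) < d1) by (replace (z1 + W1 h - z1) with (W1 h) by ring; lra).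
  assert (V1 : Rabs (z2 + W2 h - z2) < d1) by (replace (z2 + W2 h - z2) with (W2 h) by ring; lra).
  assert (U2 : Rabs (z1 + W1 h - z1) < d2) by (replace (z1 + W1 h - z1) with (W1 h) by ring; lra).
  assert (V2 : Rabs (z2 + W2 h - z2) < d2) by (replace (z2 + W2 h - z2) with (W2 h) by ring; lra).
  specialize (Hd1 _ _ U1 V1). specialize (Hd2 _ _ U2 V2). simpl in Hd1, Hd2.
  replace (z1 + W1 h - z1) with (W1 h) in Hd1, Hd2 by ring.
  replace (z2 + W2 h - z2) with (W2 h) in Hd1, Hd2 by ring.
  rewrite E1 in Hd1. rewrite E2 in Hd2. split; assumption.
Qed.

Definition jdet (F1 F2 : R -> R -> R) a b := pu F1 a b * pv F2 a b - pv F1 a b * pu F2 a b.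

Lemma lim_to_derive : forall (f : R -> R) x l,
  (forall eps, 0 < eps -> exists eta, 0 < eta /\ forall h, h <> 0 -> Rabs h < eta ->
     Rabs ((f (x + h) - f x) / h - l) < eps) -> is_derive f x l.
Proof.
  intros f x l H. apply is_derive_Reals. intros eps Heps.
  destruct (H eps Heps) as [eta [He Hh]]. exists (mkposreal eta He). exact Hh.
Qed.

Lemma ift_full : forall F1 F2 a0 b0 r, 0 < r -> Cn 1 (sq a0 b0 r) F1 -> Cn 1 (sq a0 b0 r) F2 ->
  jdet F1 F2 a0 b0 <> 0 ->
  exists rho sig (N1 N2 : R -> R -> R), 0 < rho /\ rho <= r /\ 0 < sig /\
   (forall a b a' b', sq a0 b0 rho a b -> sq a0 b0 rho a' b' ->
      F1 a b = F1 a' b' -> F2 a b = F2 a' b' -> a = a' /\ b = b') /\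
   (forall a b, sq a0 b0 rho a b -> jdet F1 F2 a b <> 0) /\
   (forall y1 y2, sq (F1 a0 b0) (F2 a0 b0) sig y1 y2 ->
      sq a0 b0 rho (N1 y1 y2) (N2 y1 y2) /\
      F1 (N1 y1 y2) (N2 y1 y2) = y1 /\ F2 (N1 y1 y2) (N2 y1 y2) = y2 /\
      continuity_2d_pt N1 y1 y2 /\ continuity_2d_pt N2 y1 y2 /\
      is_derive (fun s => N1 s y2) y1
        (pv F2 (N1 y1 y2) (N2 y1 y2) / jdet F1 F2 (N1 y1 y2) (N2 y1 y2)) /\
      is_derive (fun s => N1 y1 s) y2
        (- pv F1 (N1 y1 y2) (N2 y1 y2) / jdet F1 F2 (N1 y1 y2) (N2 y1 y2)) /\
      is_derive (fun s => N2 s y2) y1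
        (- pu F2 (N1 y1 y2) (N2 y1 y2) / jdet F1 F2 (N1 y1 y2) (N2 y1 y2)) /\
      is_derive (fun s => N2 y1 s) y2
        (pu F1 (N1 y1 y2) (N2 y1 y2) / jdet F1 F2 (N1 y1 y2) (N2 y1 y2))).
Proof.
  intros F1 F2 a0 b0 r Hr HF1 HF2 Hdet.
  assert (Cp : forall F, Cn 1 (sq a0 b0 r) F -> forall a b, sq a0 b0 r a b ->
     continuity_2d_pt (pu F) a b /\ continuity_2d_pt (pv F) a b).
  { intros F HF a b Hab. split; [exact (Cn_cont 0 _ _ (Cn_pu 0 _ _ HF) a b Hab)
                                |exact (Cn_cont 0 _ _ (Cn_pv 0 _ _ HF) a b Hab)]. }
  assert (Sp : sq a0 b0 r a0 b0) by (apply sq_center; exact Hr).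
  destruct (Cp F1 HF1 a0 b0 Sp) as [C11 C12]. destruct (Cp F2 HF2 a0 b0 Sp) as [C21 C22].
  assert (Cdet : continuity_2d_pt (jdet F1 F2) a0 b0).
  { unfold jdet. apply continuity_2d_pt_minus; apply continuity_2d_pt_mult; assumption. }
  destruct (locally_2d_sq _ _ _ (continuity_2d_pt_neq_0 _ _ _ Cdet Hdet)) as [r1 [Hr1 Hnz]].
  set (r' := Rmin r r1). assert (Hr'1 := Rmin_l r r1). assert (Hr'2 := Rmin_r r r1).
  fold r' in Hr'1, Hr'2.
  assert (Hr' : 0 < r') by (apply Rmin_glb_lt; assumption).
  assert (P1 := Cn_parts 0 _ _ HF1). assert (P2 := Cn_parts 0 _ _ HF2).
  assert (P1' : parts (sq a0 b0 r') F1) by (intros a b Hab; apply P1, (sq_mono a0 b0 r'); [lra|exact Hab]).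
  assert (P2' : parts (sq a0 b0 r') F2) by (intros a b Hab; apply P2, (sq_mono a0 b0 r'); [lra|exact Hab]).
  destruct (ift_gen F1 F2 a0 b0 r' Hr' P1' P2' C11 C12 C21 C22 Hdet)
    as [rho [sig [L [Hrho [Hrr [Hsig [HL [Lip Ex]]]]]]]].
  set (N := fun y1 y2 => epsilon (inhabits (0, 0)) (fun z : R * R =>
            sq a0 b0 rho (fst z) (snd z) /\ F1 (fst z) (snd z) = y1 /\ F2 (fst z) (snd z) = y2)).
  assert (Nspec : forall y1 y2, sq (F1 a0 b0) (F2 a0 b0) sig y1 y2 ->
     sq a0 b0 rho (fst (N y1 y2)) (snd (N y1 y2)) /\
     F1 (fst (N y1 y2)) (snd (N y1 y2)) = y1 /\ F2 (fst (N y1 y2)) (snd (N y1 y2)) = y2).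
  { intros y1 y2 Hy. unfold N. apply epsilon_spec.
    destruct (Ex y1 y2 Hy) as [a [b Hab]]. exists (a, b). exact Hab. }
  set (N1 := fun y1 y2 => fst (N y1 y2)). set (N2 := fun y1 y2 => snd (N y1 y2)).
  assert (Hsqr : forall a b, sq a0 b0 rho a b -> sq a0 b0 r a b).
  { intros a b Hab; apply (sq_mono a0 b0 rho); [lra|exact Hab]. }
  assert (NLip : forall y1 y2 y1' y2', sq (F1 a0 b0) (F2 a0 b0) sig y1 y2 ->
     sq (F1 a0 b0) (F2 a0 b0) sig y1' y2' ->
     Rabs (N1 y1' y2' - N1 y1 y2) <= L * Rmax (Rabs (y1' - y1)) (Rabs (y2' - y2)) /\
     Rabs (N2 y1' y2' - N2 y1 y2) <= L * Rmax (Rabs (y1' - y1)) (Rabs (y2' - y2))).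
  { intros y1 y2 y1' y2' Hy Hy'.
    destruct (Nspec y1 y2 Hy) as [S [E1 E2]]. destruct (Nspec y1' y2' Hy') as [S' [E1' E2']].
    destruct (Lip _ _ _ _ S S') as [L1 L2]. rewrite E1, E2, E1', E2' in L1, L2.
    split; assumption. }
  assert (NCont : forall y1 y2, sq (F1 a0 b0) (F2 a0 b0) sig y1 y2 ->
     forall d, 0 < d -> exists eta, 0 < eta /\ forall y1' y2', Rabs (y1' - y1) < eta ->
       Rabs (y2' - y2) < eta -> sq (F1 a0 b0) (F2 a0 b0) sig y1' y2' /\
       Rabs (N1 y1' y2' - N1 y1 y2) < d /\ Rabs (N2 y1' y2' - N2 y1 y2) < d).
  { intros y1 y2 Hy d Hd.
    destruct (locally_2d_sq _ _ _ (sq_locally _ _ _ _ _ Hy)) as [d0 [Hd0 Hin]].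
    exists (Rmin d0 (d / (L + 1))). split.
    - apply Rmin_glb_lt; [lra|apply Rdiv_lt_0_compat; lra].
    - intros y1' y2' H1 H2.
      assert (M1 := Rmin_l d0 (d / (L + 1))); assert (M2 := Rmin_r d0 (d / (L + 1))).
      assert (Hy' : sq (F1 a0 b0) (F2 a0 b0) sig y1' y2') by (apply Hin; split; lra).
      split; [exact Hy'|].
      destruct (NLip y1 y2 y1' y2' Hy Hy') as [L1 L2].
      assert (Hm : Rmax (Rabs (y1' - y1)) (Rabs (y2' - y2)) < d / (L + 1)).
      { apply Rmax_lub_lt; lra. }
      assert (Hm0 : 0 <= Rmax (Rabs (y1' - y1)) (Rabs (y2' - y2)))
        by (eapply Rle_trans; [apply Rabs_pos|apply Rmax_l]).
      assert (L * Rmax (Rabs (y1' - y1)) (Rabs (y2' - y2)) < d).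
      { apply Rle_lt_trans with ((L + 1) * Rmax (Rabs (y1' - y1)) (Rabs (y2' - y2))); [nra|].
        apply Rmult_lt_reg_r with (/ (L + 1)); [apply Rinv_0_lt_compat; lra|].
        replace ((L + 1) * Rmax (Rabs (y1' - y1)) (Rabs (y2' - y2)) * / (L + 1))
          with (Rmax (Rabs (y1' - y1)) (Rabs (y2' - y2))) by (field; lra). exact Hm. }
      split; lra. }
  exists rho, sig, N1, N2. split; [exact Hrho|split; [lra|split; [exact Hsig|split; [|split]]]].
  - intros a b a' b' S S' E1 E2. destruct (Lip _ _ _ _ S S') as [L1 L2].
    rewrite E1, E2, !Rminus_diag, Rabs_R0, Rmax_left, Rmult_0_r in L1, L2 by lra.
    split; [|]; apply Rminus_diag_uniq_sym; apply Rabs_eq_0; apply Rle_antisym; 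
      try assumption; apply Rabs_pos.
  - intros a b Hab. apply Hnz. split; [apply Rlt_le_trans with rho; [apply Hab|lra]
                                     |apply Rlt_le_trans with rho; [apply Hab|lra]].
  - intros y1 y2 Hy. destruct (Nspec y1 y2 Hy) as [S [E1 E2]].
    fold (N1 y1 y2) (N2 y1 y2) in S, E1, E2.
    set (z1 := N1 y1 y2) in *. set (z2 := N2 y1 y2) in *.
    assert (Sz : sq a0 b0 r z1 z2) by (apply Hsqr, S).
    assert (D1 : differentiable_pt_lim F1 z1 z2 (pu F1 z1 z2) (pv F1 z1 z2)).
    { apply (parts_diff _ F1 (open2_sq a0 b0 r) P1); [|exact Sz].
      intros a b Hab; exact (proj1 (Cp F1 HF1 a b Hab)). }
    assert (D2 : differentiable_pt_lim F2 z1 z2 (pu F2 z1 z2) (pv F2 z1 z2)).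
    { apply (parts_diff _ F2 (open2_sq a0 b0 r) P2); [|exact Sz].
      intros a b Hab; exact (proj1 (Cp F2 HF2 a b Hab)). }
    assert (Hdz : jdet F1 F2 z1 z2 <> 0).
    { apply Hnz. split; apply Rlt_le_trans with rho; try apply S; lra. }
    unfold jdet in Hdz |- *.
    assert (Hab1 : Rabs 1 <= 1) by (rewrite Rabs_R1; lra).
    assert (Hab0 : Rabs 0 <= 1) by (rewrite Rabs_R0; lra).
    assert (Dir1 := deriv_gen F1 F2 z1 z2 _ _ _ _
       (fun h => N1 (y1 + h) y2 - z1) (fun h => N2 (y1 + h) y2 - z2) 1 0 D1 D2 Hdz Hab1 Hab0).
    assert (Dir2 := deriv_gen F1 F2 z1 z2 _ _ _ _
       (fun h => N1 y1 (y2 + h) - z1) (fun h => N2 y1 (y2 + h) - z2) 0 1 D1 D2 Hdz Hab0 Hab1).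
    assert (H1 : forall d, 0 < d -> exists eta, 0 < eta /\ forall h, Rabs h < eta ->
        Rabs (N1 (y1 + h) y2 - z1) < d /\ Rabs (N2 (y1 + h) y2 - z2) < d /\
        F1 (z1 + (N1 (y1 + h) y2 - z1)) (z2 + (N2 (y1 + h) y2 - z2)) - F1 z1 z2 = h * 1 /\
        F2 (z1 + (N1 (y1 + h) y2 - z1)) (z2 + (N2 (y1 + h) y2 - z2)) - F2 z1 z2 = h * 0).
    { intros d Hd. destruct (NCont y1 y2 Hy d Hd) as [eta [Heta Hc]].
      exists eta; split; [exact Heta|]. intros h Hh.
      assert (Q1 : Rabs (y1 + h - y1) < eta) by (replace (y1 + h - y1) with h by ring; exact Hh).
      assert (Q2 : Rabs (y2 - y2) < eta) by (rewrite Rminus_diag, Rabs_R0; exact Heta).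
      destruct (Hc _ _ Q1 Q2) as [Hy' [B1 B2]].
      destruct (Nspec _ _ Hy') as [_ [G1 G2]]. fold (N1 (y1 + h) y2) (N2 (y1 + h) y2) in G1, G2.
      replace (z1 + (N1 (y1 + h) y2 - z1)) with (N1 (y1 + h) y2) by ring.
      replace (z2 + (N2 (y1 + h) y2 - z2)) with (N2 (y1 + h) y2) by ring.
      rewrite G1, G2, E1, E2. repeat split; try assumption; ring. }
    assert (H2 : forall d, 0 < d -> exists eta, 0 < eta /\ forall h, Rabs h < eta ->
        Rabs (N1 y1 (y2 + h) - z1) < d /\ Rabs (N2 y1 (y2 + h) - z2) < d /\
        F1 (z1 + (N1 y1 (y2 + h) - z1)) (z2 + (N2 y1 (y2 + h) - z2)) - F1 z1 z2 = h * 0 /\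
        F2 (z1 + (N1 y1 (y2 + h) - z1)) (z2 + (N2 y1 (y2 + h) - z2)) - F2 z1 z2 = h * 1).
    { intros d Hd. destruct (NCont y1 y2 Hy d Hd) as [eta [Heta Hc]].
      exists eta; split; [exact Heta|]. intros h Hh.
      assert (Q2 : Rabs (y2 + h - y2) < eta) by (replace (y2 + h - y2) with h by ring; exact Hh).
      assert (Q1 : Rabs (y1 - y1) < eta) by (rewrite Rminus_diag, Rabs_R0; exact Heta).
      destruct (Hc _ _ Q1 Q2) as [Hy' [B1 B2]].
      destruct (Nspec _ _ Hy') as [_ [G1 G2]]. fold (N1 y1 (y2 + h)) (N2 y1 (y2 + h)) in G1, G2.
      replace (z1 + (N1 y1 (y2 + h) - z1)) with (N1 y1 (y2 + h)) by ring.
      replace (z2 + (N2 y1 (y2 + h) - z2)) with (N2 y1 (y2 + h)) by ring.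
      rewrite G1, G2, E1, E2. repeat split; try assumption; ring. }
    specialize (Dir1 H1). specialize (Dir2 H2).
    split; [exact S|split; [exact E1|split; [exact E2|]]].
    split; [|split; [|split; [|split; [|split]]]].
    + intros eps. destruct (NCont y1 y2 Hy eps (cond_pos eps)) as [eta [Heta Hc]].
      exists (mkposreal eta Heta). intros u v Hu Hv. exact (proj1 (proj2 (Hc u v Hu Hv))).
    + intros eps. destruct (NCont y1 y2 Hy eps (cond_pos eps)) as [eta [Heta Hc]].
      exists (mkposreal eta Heta). intros u v Hu Hv. exact (proj2 (proj2 (Hc u v Hu Hv))).
    + apply lim_to_derive. intros eps Heps. destruct (Dir1 eps Heps) as [eta [He Hh]].
      exists eta; split; [exact He|]. intros h Hh0 Hh1. destruct (Hh h Hh0 Hh1) as [R1 R2].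
      replace (pv F2 z1 z2 / _) with
        ((pv F2 z1 z2 * 1 - pv F1 z1 z2 * 0) / (pu F1 z1 z2 * pv F2 z1 z2 - pv F1 z1 z2 * pu F2 z1 z2))
        by (field; exact Hdz). exact R1.
    + apply lim_to_derive. intros eps Heps. destruct (Dir2 eps Heps) as [eta [He Hh]].
      exists eta; split; [exact He|]. intros h Hh0 Hh1. destruct (Hh h Hh0 Hh1) as [R1 R2].
      replace (- pv F1 z1 z2 / _) with
        ((pv F2 z1 z2 * 0 - pv F1 z1 z2 * 1) / (pu F1 z1 z2 * pv F2 z1 z2 - pv F1 z1 z2 * pu F2 z1 z2))
        by (field; exact Hdz). exact R1.
    + apply lim_to_derive. intros eps Heps. destruct (Dir1 eps Heps) as [eta [He Hh]].
      exists eta; split; [exact He|]. intros h Hh0 Hh1. destruct (Hh h Hh0 Hh1) as [R1 R2].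
      replace (- pu F2 z1 z2 / _) with
        ((pu F1 z1 z2 * 0 - pu F2 z1 z2 * 1) / (pu F1 z1 z2 * pv F2 z1 z2 - pv F1 z1 z2 * pu F2 z1 z2))
        by (field; exact Hdz). exact R2.
    + apply lim_to_derive. intros eps Heps. destruct (Dir2 eps Heps) as [eta [He Hh]].
      exists eta; split; [exact He|]. intros h Hh0 Hh1. destruct (Hh h Hh0 Hh1) as [R1 R2].
      replace (pu F1 z1 z2 / _) with
        ((pu F1 z1 z2 * 1 - pu F2 z1 z2 * 0) / (pu F1 z1 z2 * pv F2 z1 z2 - pv F1 z1 z2 * pu F2 z1 z2))
        by (field; exact Hdz). exact R2.
Qed.


Lemma schwarz_D : forall D f, open2 D -> Cn 2 D f -> forall a b, D a b ->
  pu (pv f) a b = pv (pu f) a b.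
Proof.
  intros D f HD Hf a b Hab.
  assert (Pf := Cn_parts 1 _ _ Hf).
  assert (Pu := Cn_parts 0 _ _ (Cn_pu 1 _ _ Hf)).
  assert (Pv := Cn_parts 0 _ _ (Cn_pv 1 _ _ Hf)).
  assert (Cuv := Cn_cont 0 _ _ (Cn_pu 0 _ _ (Cn_pv 1 _ _ Hf))).
  assert (Cvu := Cn_cont 0 _ _ (Cn_pv 0 _ _ (Cn_pu 1 _ _ Hf))).
  unfold pu, pv. apply Schwarz.
  - destruct (open2_locally D a b HD Hab) as [d Hd]. exists d; intros u v Hu Hv.
    assert (Duv := Hd u v Hu Hv).
    destruct (Pf u v Duv) as [A1 A2]. destruct (Pv u v Duv) as [B1 _]. destruct (Pu u v Duv) as [_ C2].
    repeat split; assumption.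
  - exact (Cuv a b Hab).
  - exact (Cvu a b Hab).
Qed.

Lemma locally_R : forall (P : R -> Prop) x, (exists e, 0 < e /\ forall y, Rabs (y - x) < e -> P y) ->
  locally x P.
Proof.
  intros P x [e [He H]]. exists (mkposreal e He). intros y Hy. apply H. exact Hy.
Qed.

Lemma ex_RInt_cont_R : forall f a b, (forall z, Rmin a b <= z <= Rmax a b -> continuous f z) ->
  @ex_RInt R_NormedModule f a b.
Proof. intros f a b H. exact (@ex_RInt_continuous R_CompleteNormedModule f a b H). Qed.

Lemma seg_in : forall c1 c2 rho a b s, sq c1 c2 rho a b -> Rmin c1 a <= s <= Rmax c1 a ->
  sq c1 c2 rho s b.
Proof.
  intros c1 c2 rho a b s [Ha Hb] Hs. split; [|exact Hb].
  apply (between_abs c1 a s c1 rho Hs); [|exact Ha].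
  destruct (Rlt_le_dec 0 rho); [rewrite Rminus_diag, Rabs_R0; lra|].
  assert (H0 := Rabs_pos (a - c1)). lra.
Qed.

Lemma seg_in2 : forall c1 c2 rho a b s, sq c1 c2 rho a b -> Rmin c2 b <= s <= Rmax c2 b ->
  sq c1 c2 rho c1 s.
Proof.
  intros c1 c2 rho a b s [Ha Hb] Hs. split.
  - rewrite Rminus_diag, Rabs_R0. assert (H0 := Rabs_pos (a - c1)). lra.
  - apply (between_abs c2 b s c2 rho Hs); [|exact Hb].
    rewrite Rminus_diag, Rabs_R0. assert (H0 := Rabs_pos (b - c2)). lra.
Qed.

Lemma sq_near : forall c1 c2 rho a b, sq c1 c2 rho a b ->
  exists e, 0 < e /\ forall a' b', Rabs (a' - a) < e -> Rabs (b' - b) < e -> sq c1 c2 rho a' b'.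
Proof.
  intros c1 c2 rho a b H. destruct (sq_locally _ _ _ _ _ H) as [d Hd].
  exists d; split; [apply cond_pos|]. exact Hd.
Qed.

Lemma poincare : forall c1 c2 rho (p q : R -> R -> R), 0 < rho ->
  (forall n, Cn n (sq c1 c2 rho) p) -> (forall n, Cn n (sq c1 c2 rho) q) ->
  (forall a b, sq c1 c2 rho a b -> pv p a b = pu q a b) ->
  exists P, (forall n, Cn n (sq c1 c2 rho) P) /\
    forall a b, sq c1 c2 rho a b -> pu P a b = p a b /\ pv P a b = q a b.
Proof.
  intros c1 c2 rho p q Hrho Hp Hq Hcl.
  set (D := sq c1 c2 rho). assert (HD : open2 D) by apply open2_sq.
  assert (Cp := Cn_cont 0 _ _ (Hp 0%nat)). assert (Cq := Cn_cont 0 _ _ (Hq 0%nat)).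
  assert (Pp := Cn_parts 0 _ _ (Hp 1%nat)). assert (Pq := Cn_parts 0 _ _ (Hq 1%nat)).
  assert (Cpv := Cn_cont 0 _ _ (Cn_pv 0 _ _ (Hp 1%nat))).
  assert (Cqu := Cn_cont 0 _ _ (Cn_pu 0 _ _ (Hq 1%nat))).
  set (P := fun a b => RInt (fun s => p s b) c1 a + RInt (fun s => q c1 s) c2 b).
  assert (ExR1 : forall a b, D a b -> ex_RInt (fun s => p s b) c1 a).
  { intros a b Hab. apply (@ex_RInt_continuous R_CompleteNormedModule). intros s Hs.
    apply cont2_1, Cp, (seg_in c1 c2 rho a b s Hab Hs). }
  assert (ExR2 : forall a b, D a b -> ex_RInt (fun s => q c1 s) c2 b).
  { intros a b Hab. apply (@ex_RInt_continuous R_CompleteNormedModule). intros s Hs.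
    apply cont2_2, Cq, (seg_in2 c1 c2 rho a b s Hab Hs). }
  assert (Du : forall a b, D a b -> is_derive (fun a' => P a' b) a (p a b)).
  { intros a b Hab. unfold P.
    replace (p a b) with (p a b + 0) by ring.
    apply (is_derive_plus (fun a' => RInt (fun s => p s b) c1 a') (fun _ => RInt (fun s => q c1 s) c2 b)).
    - apply (is_derive_RInt (fun s => p s b) (fun a' => RInt (fun s => p s b) c1 a') c1 a).
      + apply locally_R. destruct (sq_near _ _ _ _ _ Hab) as [e [He Hn]].
        exists e; split; [exact He|]. intros y Hy. apply (@RInt_correct R_CompleteNormedModule), (ExR1 y b).
        apply Hn; [exact Hy|rewrite Rminus_diag, Rabs_R0; exact He].
      + apply cont2_1, Cp, Hab.
    - exact (is_derive_const (RInt (fun s => q c1 s) c2 b) a). }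
  assert (Dv : forall a b, D a b -> is_derive (fun b' => P a b') b (q a b)).
  { intros a b Hab. unfold P.
    destruct (sq_near _ _ _ _ _ Hab) as [e [He Hn]].
    replace (q a b) with ((q a b - q c1 b) + q c1 b) by ring.
    apply (is_derive_plus (fun b' => RInt (fun s => p s b') c1 a) (fun b' => RInt (fun s => q c1 s) c2 b')).
    - assert (Hpar := is_derive_RInt_param (fun b' s => p s b') c1 a b).
      assert (E : RInt (fun t => Derive (fun u => p t u) b) c1 a = q a b - q c1 b).
      { rewrite (RInt_ext _ (fun t => pu q t b)).
        - apply (RInt_Derive (fun s => q s b) c1 a).
          + intros s Hs. exact (proj1 (Pq s b (seg_in c1 c2 rho a b s Hab Hs))).
          + intros s Hs. apply (cont2_1 (pu q)), Cqu, (seg_in c1 c2 rho a b s Hab Hs).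
        - intros s Hs. apply Hcl. apply (seg_in c1 c2 rho a b s Hab). lra. }
      assert (A1 : locally b (fun x0 => forall t, Rmin c1 a <= t <= Rmax c1 a ->
                 ex_derive (fun u => p t u) x0)).
      { apply locally_R. exists e; split; [exact He|]. intros y Hy t Ht.
        refine (proj2 (Pp t y _)). apply (seg_in c1 c2 rho a y t); [|exact Ht].
        apply Hn; [rewrite Rminus_diag, Rabs_R0; exact He|exact Hy]. }
      assert (A2 : forall t, Rmin c1 a <= t <= Rmax c1 a ->
                 continuity_2d_pt (fun u v => Derive (fun z => p v z) u) b t).
      { intros t Ht. apply (cont2_swap (pv p)). apply Cpv, (seg_in c1 c2 rho a b t Hab Ht). }
      assert (A3 : locally b (fun y => @ex_RInt R_NormedModule (fun t => p t y) c1 a)).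
      { apply locally_R. exists e; split; [exact He|]. intros y Hy.
        assert (Hy' : D a y) by (apply Hn; [rewrite Rminus_diag, Rabs_R0; exact He|exact Hy]).
        apply ex_RInt_cont_R. intros s Hs.
        apply cont2_1, Cp, (seg_in c1 c2 rho a y s Hy' Hs). }
      rewrite <- E. refine (Hpar A1 A2 _). exact A3.
    - apply (is_derive_RInt (fun s => q c1 s) (fun b' => RInt (fun s => q c1 s) c2 b') c2 b).
      + apply locally_R. exists e; split; [exact He|]. intros y Hy.
        apply (@RInt_correct R_CompleteNormedModule), (ExR2 a y).
        apply Hn; [rewrite Rminus_diag, Rabs_R0; exact He|exact Hy].
      + apply cont2_2, Cq. destruct Hab as [Ha Hb]. split; [rewrite Rminus_diag, Rabs_R0; lra|exact Hb]. }
  assert (EP : forall a b, D a b -> pu P a b = p a b /\ pv P a b = q a b).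
  { intros a b Hab. split; apply is_derive_unique; [apply Du|apply Dv]; exact Hab. }
  exists P. split; [|exact EP].
  assert (PP : parts D P).
  { intros a b Hab. split; [exists (p a b); exact (Du a b Hab)|exists (q a b); exact (Dv a b Hab)]. }
  assert (G : forall n, Cn (S n) D P).
  { intros n. refine (Cn_S_intro n D P HD PP _ _).
    - apply Cn_ext with p; [exact HD| |apply Hp]. intros a b Hab; symmetry; exact (proj1 (EP a b Hab)).
    - apply Cn_ext with q; [exact HD| |apply Hq]. intros a b Hab; symmetry; exact (proj2 (EP a b Hab)). }
  intros n. apply (Cn_le n (S n)); [lia|apply G].
Qed.


Lemma pu_ext : forall D (g k : R -> R -> R), open2 D -> (forall a b, D a b -> g a b = k a b) ->
  forall a b, D a b -> pu g a b = pu k a b.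
Proof.
  intros D g k HD E a b Hab. unfold pu. apply Derive_ext_loc.
  destruct (open2_locally D a b HD Hab) as [d Hd]. exists d. intros y Hy.
  apply E, Hd; [exact Hy|rewrite Rminus_diag, Rabs_R0; apply cond_pos].
Qed.

Lemma pv_ext : forall D (g k : R -> R -> R), open2 D -> (forall a b, D a b -> g a b = k a b) ->
  forall a b, D a b -> pv g a b = pv k a b.
Proof.
  intros D g k HD E a b Hab. unfold pv. apply Derive_ext_loc.
  destruct (open2_locally D a b HD Hab) as [d Hd]. exists d. intros y Hy.
  apply E, Hd; [rewrite Rminus_diag, Rabs_R0; apply cond_pos|exact Hy].
Qed.

Lemma pu_mult : forall (g k : R -> R -> R) a b, ex_derive (fun s => g s b) a ->
  ex_derive (fun s => k s b) a ->
  pu (fun a b => g a b * k a b) a b = pu g a b * k a b + g a b * pu k a b.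
Proof. intros; unfold pu; rewrite Derive_mult; auto. Qed.

Lemma pv_mult : forall (g k : R -> R -> R) a b, ex_derive (fun s => g a s) b ->
  ex_derive (fun s => k a s) b ->
  pv (fun a b => g a b * k a b) a b = pv g a b * k a b + g a b * pv k a b.
Proof. intros; unfold pv; rewrite Derive_mult; auto. Qed.

Lemma pu_div : forall (g k : R -> R -> R) a b, ex_derive (fun s => g s b) a ->
  ex_derive (fun s => k s b) a -> k a b <> 0 ->
  pu (fun a b => g a b / k a b) a b = (pu g a b * k a b - g a b * pu k a b) / (k a b) ^ 2.
Proof. intros; unfold pu; rewrite Derive_div; auto. Qed.

Lemma pv_div : forall (g k : R -> R -> R) a b, ex_derive (fun s => g a s) b ->
  ex_derive (fun s => k a s) b -> k a b <> 0 ->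
  pv (fun a b => g a b / k a b) a b = (pv g a b * k a b - g a b * pv k a b) / (k a b) ^ 2.
Proof. intros; unfold pv; rewrite Derive_div; auto. Qed.

Lemma pu_minus : forall (g k : R -> R -> R) a b, ex_derive (fun s => g s b) a ->
  ex_derive (fun s => k s b) a ->
  pu (fun a b => g a b - k a b) a b = pu g a b - pu k a b.
Proof. intros; unfold pu; rewrite Derive_minus; auto. Qed.

Lemma pv_minus : forall (g k : R -> R -> R) a b, ex_derive (fun s => g a s) b ->
  ex_derive (fun s => k a s) b ->
  pv (fun a b => g a b - k a b) a b = pv g a b - pv k a b.
Proof. intros; unfold pv; rewrite Derive_minus; auto. Qed.

Lemma ex_derive_Rmult : forall (f g : R -> R) x, ex_derive f x -> ex_derive g x ->
  ex_derive (fun y => f y * g y) x.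
Proof. intros; apply ex_derive_mult; assumption. Qed.

Lemma ex_derive_Rdiv : forall (f g : R -> R) x, ex_derive f x -> ex_derive g x -> g x <> 0 ->
  ex_derive (fun y => f y / g y) x.
Proof. intros; apply (ex_derive_div f g x); assumption. Qed.

Lemma ex_derive_Rminus : forall (f g : R -> R) x, ex_derive f x -> ex_derive g x ->
  ex_derive (fun y => f y - g y) x.
Proof. intros; apply (ex_derive_minus f g x); assumption. Qed.

Definition Sm D f := forall n, Cn n D f.

Lemma Sm_pu : forall D f, Sm D f -> Sm D (pu f).
Proof. intros D f H n. apply (Cn_pu n), H. Qed.
Lemma Sm_pv : forall D f, Sm D f -> Sm D (pv f).
Proof. intros D f H n. apply (Cn_pv n), H. Qed.
Lemma Sm_parts : forall D f, Sm D f -> parts D f.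
Proof. intros D f H. apply (Cn_parts 0), H. Qed.
Lemma Sm_sub : forall (D D' : R -> R -> Prop) f, (forall a b, D' a b -> D a b) -> Sm D f -> Sm D' f.
Proof. intros D D' f HD H n. apply (Cn_sub n D D'), H; assumption. Qed.
Lemma Sm_mult : forall D f g, open2 D -> Sm D f -> Sm D g -> Sm D (fun a b => f a b * g a b).
Proof. intros D f g HD Hf Hg n. apply Cn_mult; auto. Qed.
Lemma Sm_plus : forall D f g, open2 D -> Sm D f -> Sm D g -> Sm D (fun a b => f a b + g a b).
Proof. intros D f g HD Hf Hg n. apply Cn_plus; auto. Qed.
Lemma Sm_minus : forall D f g, open2 D -> Sm D f -> Sm D g -> Sm D (fun a b => f a b - g a b).
Proof. intros D f g HD Hf Hg n. apply Cn_minus; auto. Qed.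
Lemma Sm_div : forall D f g, open2 D -> (forall a b, D a b -> g a b <> 0) -> Sm D f -> Sm D g ->
  Sm D (fun a b => f a b / g a b).
Proof. intros D f g HD Hnz Hf Hg n. apply Cn_div; auto. Qed.
Lemma Sm_ext : forall D f g, open2 D -> (forall a b, D a b -> f a b = g a b) -> Sm D f -> Sm D g.
Proof. intros D f g HD E Hf n. apply Cn_ext with f; auto. Qed.

Lemma schw : forall D f, open2 D -> Sm D f -> forall a b, D a b -> pu (pv f) a b = pv (pu f) a b.
Proof. intros D f HD Hf a b Hab. apply (schwarz_D D f HD (Hf 2%nat) a b Hab). Qed.


Lemma part2 : forall (D : R -> R -> Prop) (h : R -> R -> R),
    open2 D -> smooth_on D h ->
    (forall a b, D a b -> pu (pu h) a b * pv (pv h) a b <> 0) ->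
  (forall (f : R -> R -> R) (u0 v0 r x0 t0 : R),
     0 < r ->
     (forall a b, sq u0 v0 r a b -> D a b) ->
     smooth_on (sq u0 v0 r) f ->
     (forall a b, sq u0 v0 r a b -> lin_pde h f a b) ->
     hodo h f x0 t0 u0 v0 ->
     (t0 * pu (pu (pv h)) u0 v0 - pu (pu (pv f)) u0 v0)
       * (t0 * pv (pv (pv h)) u0 v0 - pv (pv (pv f)) u0 v0)
     - (t0 * pu (pv (pv h)) u0 v0 - pu (pv (pv f)) u0 v0) ^ 2 <> 0 ->
     exists (e d : R) (u v : R -> R -> R),
       0 < e /\ 0 < d /\ d <= r /\
       u x0 t0 = u0 /\ v x0 t0 = v0 /\
       forall x t, sq x0 t0 e x t ->
         sq u0 v0 d (u x t) (v x t) /\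
         hodo h f x t (u x t) (v x t) /\
         (forall a b, sq u0 v0 d a b -> hodo h f x t a b ->
            a = u x t /\ b = v x t) /\
         solves_S h u v x t).
Proof.
  intros D h HD Hh Hnz f u0 v0 r x0 t0 Hr HSD Hf Hpde Hhodo Hdet.
  set (S := sq u0 v0 r). assert (HS : open2 S) by apply open2_sq.
  assert (Hs : Sm S h) by (apply (Sm_sub D S h HSD); intro n; apply smooth_Cn, Hh).
  assert (Fs : Sm S f) by (intro n; apply smooth_Cn, Hf).
  assert (Hvv : forall a b, S a b -> pv (pv h) a b <> 0).
  { intros a b Hab Z. apply (Hnz a b (HSD a b Hab)). rewrite Z; ring. }
  set (M2 := fun a b => pv (pv f) a b / pv (pv h) a b).
  set (M1 := fun a b => pv (pu f) a b - M2 a b * pv (pu h) a b).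
  assert (SM2 : Sm S M2) by (apply Sm_div; auto; do 2 apply Sm_pv; auto).
  assert (SM1 : Sm S M1).
  { apply Sm_minus; auto; [apply Sm_pv, Sm_pu; auto|apply Sm_mult; auto; apply Sm_pv, Sm_pu; auto]. }
  assert (Pfvv := Sm_parts _ _ (Sm_pv _ _ (Sm_pv _ _ Fs))).
  assert (Phvv := Sm_parts _ _ (Sm_pv _ _ (Sm_pv _ _ Hs))).
  assert (Pfuv := Sm_parts _ _ (Sm_pv _ _ (Sm_pu _ _ Fs))).
  assert (Phuv := Sm_parts _ _ (Sm_pv _ _ (Sm_pu _ _ Hs))).
  assert (Phuu := Sm_parts _ _ (Sm_pu _ _ (Sm_pu _ _ Hs))).
  assert (PM2 := Sm_parts _ _ SM2).
  assert (PU2 : forall a b, S a b -> pu M2 a b =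
     (pu (pv (pv f)) a b * pv (pv h) a b - pv (pv f) a b * pu (pv (pv h)) a b) / (pv (pv h) a b) ^ 2).
  { intros a b Hab. unfold M2. apply pu_div; [exact (proj1 (Pfvv a b Hab))|exact (proj1 (Phvv a b Hab))|auto]. }
  assert (PV2 : forall a b, S a b -> pv M2 a b =
     (pv (pv (pv f)) a b * pv (pv h) a b - pv (pv f) a b * pv (pv (pv h)) a b) / (pv (pv h) a b) ^ 2).
  { intros a b Hab. unfold M2. apply pv_div; [exact (proj2 (Pfvv a b Hab))|exact (proj2 (Phvv a b Hab))|auto]. }
  assert (PU1 : forall a b, S a b -> pu M1 a b =
     pu (pv (pu f)) a b - (pu M2 a b * pv (pu h) a b + M2 a b * pu (pv (pu h)) a b)).
  { intros a b Hab. unfold M1.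
    rewrite (pu_minus (pv (pu f)) (fun a b => M2 a b * pv (pu h) a b)).
    - rewrite pu_mult; [reflexivity|exact (proj1 (PM2 a b Hab))|exact (proj1 (Phuv a b Hab))].
    - exact (proj1 (Pfuv a b Hab)).
    - apply ex_derive_Rmult; [exact (proj1 (PM2 a b Hab))|exact (proj1 (Phuv a b Hab))]. }
  assert (PV1 : forall a b, S a b -> pv M1 a b =
     pv (pv (pu f)) a b - (pv M2 a b * pv (pu h) a b + M2 a b * pv (pv (pu h)) a b)).
  { intros a b Hab. unfold M1.
    rewrite (pv_minus (pv (pu f)) (fun a b => M2 a b * pv (pu h) a b)).
    - rewrite pv_mult; [reflexivity|exact (proj2 (PM2 a b Hab))|exact (proj2 (Phuv a b Hab))].
    - exact (proj2 (Pfuv a b Hab)).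
    - apply ex_derive_Rmult; [exact (proj2 (PM2 a b Hab))|exact (proj2 (Phuv a b Hab))]. }
  assert (X1 : forall g, Sm S g -> forall a b, S a b -> pu (pv (pu g)) a b = pu (pu (pv g)) a b).
  { intros g Hg a b Hab. apply (pu_ext S); auto. intros x y Hxy. symmetry. apply (schw S g HS Hg x y Hxy). }
  assert (X2 : forall g, Sm S g -> forall a b, S a b -> pv (pv (pu g)) a b = pu (pv (pv g)) a b).
  { intros g Hg a b Hab. rewrite (pv_ext S (pv (pu g)) (pu (pv g))); auto.
    - symmetry. apply (schw S (pv g) HS (Sm_pv _ _ Hg) a b Hab).
    - intros x y Hxy. symmetry. apply (schw S g HS Hg x y Hxy). }
  assert (X3 : forall g, Sm S g -> forall a b, S a b -> pu (pv (pu g)) a b = pv (pu (pu g)) a b).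
  { intros g Hg a b Hab. apply (schw S (pu g) HS (Sm_pu _ _ Hg) a b Hab). }
  assert (PD : forall a b, S a b -> pv (pu (pu f)) a b = pv (pu (pu h)) a b * M2 a b + pu (pu h) a b * pv M2 a b).
  { intros a b Hab. rewrite (pv_ext S (pu (pu f)) (fun a b => pu (pu h) a b * M2 a b)); auto.
    - apply pv_mult; [exact (proj2 (Phuu a b Hab))|exact (proj2 (PM2 a b Hab))].
    - intros x y Hxy. unfold M2. assert (E := Hpde x y Hxy). unfold lin_pde in E.
      assert (Hv := Hvv x y Hxy). field_simplify; [|exact Hv].
      apply Rmult_eq_reg_r with (pv (pv h) x y); [|exact Hv].
      field_simplify; [|exact Hv]. rewrite E. ring. }
  assert (Sp : S u0 v0) by (apply sq_center; exact Hr).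
  destruct Hhodo as [Ho1 Ho2].
  assert (Ht0 : M2 u0 v0 = t0).
  { unfold M2. rewrite <- Ho2. field. apply Hvv, Sp. }
  assert (Hx0 : M1 u0 v0 = x0).
  { unfold M1. rewrite Ht0. lra. }
  assert (Hj : jdet M1 M2 u0 v0 <> 0).
  { unfold jdet. rewrite (PU1 _ _ Sp), (PV1 _ _ Sp), (PU2 _ _ Sp), (PV2 _ _ Sp), Ht0.
    rewrite (X1 f Fs _ _ Sp), (X1 h Hs _ _ Sp), (X2 f Fs _ _ Sp), (X2 h Hs _ _ Sp).
    rewrite <- Ho2.
    assert (Hv := Hvv _ _ Sp).
    intro Z. apply Hdet.
    set (hv := pv (pv h) u0 v0) in *.
    apply Rmult_eq_reg_r with (/ hv); [|apply Rinv_neq_0_compat; exact Hv].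
    rewrite Rmult_0_l. rewrite <- Z. field. exact Hv. }
  destruct (ift_full M1 M2 u0 v0 r Hr (SM1 1%nat) (SM2 1%nat) Hj)
    as [rho [sig [N1 [N2 [Hrho [Hrr [Hsig [Inj [Jnz Main]]]]]]]]].
  rewrite Hx0, Ht0 in Main.
  assert (HrS : forall a b, sq u0 v0 rho a b -> S a b).
  { intros a b Hab. apply (sq_mono u0 v0 rho); [lra|exact Hab]. }
  exists sig, rho, N1, N2.
  assert (Sx : sq x0 t0 sig x0 t0) by (apply sq_center; exact Hsig).
  destruct (Main x0 t0 Sx) as [Nb [NE1 [NE2 _]]].
  assert (Spr : sq u0 v0 rho u0 v0) by (apply sq_center; exact Hrho).
  destruct (Inj _ _ _ _ Nb Spr) as [Eu Ev]; [rewrite NE1, Hx0; reflexivity|rewrite NE2, Ht0; reflexivity|].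
  split; [exact Hsig|split; [exact Hrho|split; [exact Hrr|split; [exact Eu|split; [exact Ev|]]]]].
  intros x t Hxt.
  destruct (Main x t Hxt) as [Nin [E1 [E2 [_ [_ [Dux [Dut [Dvx Dvt]]]]]]]].
  set (a := N1 x t) in *. set (b := N2 x t) in *.
  assert (Sab : S a b) by (apply HrS, Nin).
  assert (Hv := Hvv a b Sab).
  assert (Hja := Jnz a b Nin).
  split; [exact Nin|split; [|split]].
  -
    unfold M1, M2 in E1, E2. split.
    + rewrite <- E1, <- E2. ring.
    + rewrite <- E2. field. exact Hv.
  - intros a' b' Hab' [Ho1' Ho2'].
    assert (Q2 : M2 a' b' = t).
    { unfold M2. rewrite <- Ho2'. field. apply Hvv, HrS, Hab'. }
    assert (Q1 : M1 a' b' = x).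
    { unfold M1. rewrite Q2. lra. }
    destruct (Inj a' b' a b Hab' Nin) as [R1 R2]; [rewrite Q1, E1; reflexivity|rewrite Q2, E2; reflexivity|].
    split; assumption.
  - unfold solves_S. fold a b.
    assert (dux : Derive (fun y => N1 y t) x = pv M2 a b / jdet M1 M2 a b)
      by (apply is_derive_unique; exact Dux).
    assert (dut : Derive (fun s => N1 x s) t = - pv M1 a b / jdet M1 M2 a b)
      by (apply is_derive_unique; exact Dut).
    assert (dvx : Derive (fun y => N2 y t) x = - pu M2 a b / jdet M1 M2 a b)
      by (apply is_derive_unique; exact Dvx).
    assert (dvt : Derive (fun s => N2 x s) t = pu M1 a b / jdet M1 M2 a b)
      by (apply is_derive_unique; exact Dvt).
    rewrite dux, dut, dvx, dvt.
    split; [exists (pv M2 a b / jdet M1 M2 a b); exact Dux|].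
    split; [exists (- pv M1 a b / jdet M1 M2 a b); exact Dut|].
    split; [exists (- pu M2 a b / jdet M1 M2 a b); exact Dvx|].
    split; [exists (pu M1 a b / jdet M1 M2 a b); exact Dvt|].
    split.
    + assert (K1 : - pv M1 a b = pv (pu h) a b * pv M2 a b - pv (pv h) a b * pu M2 a b).
      { rewrite (PV1 _ _ Sab), (PU2 _ _ Sab), (PV2 _ _ Sab).
        rewrite (X2 f Fs _ _ Sab), (X2 h Hs _ _ Sab). unfold M2. field. exact Hv. }
      unfold Rdiv. replace (- pv M1 a b) with (pv (pu h) a b * pv M2 a b - pv (pv h) a b * pu M2 a b) by lra. ring.
    + assert (K2 : pu M1 a b = pu (pu h) a b * pv M2 a b - pv (pu h) a b * pu M2 a b).
      { rewrite (PU1 _ _ Sab), (X3 f Fs _ _ Sab), (X3 h Hs _ _ Sab), (PD _ _ Sab). ring. }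
      unfold Rdiv. rewrite K2. ring.
Qed.


Lemma pu_plus : forall (g k : R -> R -> R) a b, ex_derive (fun s => g s b) a ->
  ex_derive (fun s => k s b) a ->
  pu (fun a b => g a b + k a b) a b = pu g a b + pu k a b.
Proof. intros; unfold pu; rewrite Derive_plus; auto. Qed.

Lemma pv_plus : forall (g k : R -> R -> R) a b, ex_derive (fun s => g a s) b ->
  ex_derive (fun s => k a s) b ->
  pv (fun a b => g a b + k a b) a b = pv g a b + pv k a b.
Proof. intros; unfold pv; rewrite Derive_plus; auto. Qed.

Lemma Sm_comp : forall D E g p q, open2 D -> open2 E -> Sm E g -> Sm D p -> Sm D q ->
  (forall a b, D a b -> E (p a b) (q a b)) -> Sm D (fun a b => g (p a b) (q a b)).
Proof. intros D E g p q HD HE Hg Hp Hq Him n. apply (Cn_comp n D E); auto. Qed.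

Lemma inv_smooth : forall (F1 F2 N1 N2 : R -> R -> R) E V, open2 E -> open2 V ->
  Sm E F1 -> Sm E F2 ->
  (forall a b, V a b -> E (N1 a b) (N2 a b) /\ jdet F1 F2 (N1 a b) (N2 a b) <> 0 /\
     continuity_2d_pt N1 a b /\ continuity_2d_pt N2 a b /\
     is_derive (fun s => N1 s b) a (pv F2 (N1 a b) (N2 a b) / jdet F1 F2 (N1 a b) (N2 a b)) /\
     is_derive (fun s => N1 a s) b (- pv F1 (N1 a b) (N2 a b) / jdet F1 F2 (N1 a b) (N2 a b)) /\
     is_derive (fun s => N2 s b) a (- pu F2 (N1 a b) (N2 a b) / jdet F1 F2 (N1 a b) (N2 a b)) /\
     is_derive (fun s => N2 a s) b (pu F1 (N1 a b) (N2 a b) / jdet F1 F2 (N1 a b) (N2 a b))) ->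
  Sm V N1 /\ Sm V N2.
Proof.
  intros F1 F2 N1 N2 E V HE HV S1 S2 HN.
  assert (SJ : Sm E (jdet F1 F2)).
  { unfold jdet. apply Sm_minus; auto; apply Sm_mult; auto;
      first [apply Sm_pu|apply Sm_pv]; auto. }
  assert (G : forall n, Cn n V N1 /\ Cn n V N2).
  { induction n as [|n [IH1 IH2]].
    - split; apply Cn_0; intros a b Hab; destruct (HN a b Hab) as [_ [_ [C1 [C2 _]]]]; assumption.
    - assert (Comp : forall g, Sm E g -> Cn n V (fun a b => g (N1 a b) (N2 a b))).
      { intros g Hg. apply (Cn_comp n V E); auto. intros a b Hab; exact (proj1 (HN a b Hab)). }
      assert (CJ := Comp _ SJ).
      assert (Jnz : forall a b, V a b -> jdet F1 F2 (N1 a b) (N2 a b) <> 0)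
        by (intros a b Hab; exact (proj1 (proj2 (HN a b Hab)))).
      assert (Cq : forall g, Sm E g -> Cn n V (fun a b => g (N1 a b) (N2 a b) / jdet F1 F2 (N1 a b) (N2 a b))).
      { intros g Hg. apply Cn_div with (f := fun a b => g (N1 a b) (N2 a b))
          (g := fun a b => jdet F1 F2 (N1 a b) (N2 a b)); auto. }
      assert (Cqn : forall g, Sm E g -> Cn n V (fun a b => - g (N1 a b) (N2 a b) / jdet F1 F2 (N1 a b) (N2 a b))).
      { intros g Hg. apply Cn_ext with (fun a b => - ((fun a b => g (N1 a b) (N2 a b) / jdet F1 F2 (N1 a b) (N2 a b)) a b)); auto.
        - intros a b Hab. field. apply Jnz, Hab.
        - apply Cn_opp; auto. }
      split; apply Cn_S_intro; auto.
      + intros a b Hab; destruct (HN a b Hab) as [_ [_ [_ [_ [D1 [D2 _]]]]]].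
        split; [exists (pv F2 (N1 a b) (N2 a b) / jdet F1 F2 (N1 a b) (N2 a b)); exact D1
               |exists (- pv F1 (N1 a b) (N2 a b) / jdet F1 F2 (N1 a b) (N2 a b)); exact D2].
      + apply Cn_ext with (fun a b => pv F2 (N1 a b) (N2 a b) / jdet F1 F2 (N1 a b) (N2 a b)); auto.
        * intros a b Hab; destruct (HN a b Hab) as [_ [_ [_ [_ [D1 _]]]]].
          symmetry; apply is_derive_unique; exact D1.
        * apply Cq, Sm_pv; auto.
      + apply Cn_ext with (fun a b => - pv F1 (N1 a b) (N2 a b) / jdet F1 F2 (N1 a b) (N2 a b)); auto.
        * intros a b Hab; destruct (HN a b Hab) as [_ [_ [_ [_ [_ [D2 _]]]]]].
          symmetry; apply is_derive_unique; exact D2.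
        * apply Cqn, Sm_pv; auto.
      + intros a b Hab; destruct (HN a b Hab) as [_ [_ [_ [_ [_ [_ [D3 D4]]]]]]].
        split; [exists (- pu F2 (N1 a b) (N2 a b) / jdet F1 F2 (N1 a b) (N2 a b)); exact D3
               |exists (pu F1 (N1 a b) (N2 a b) / jdet F1 F2 (N1 a b) (N2 a b)); exact D4].
      + apply Cn_ext with (fun a b => - pu F2 (N1 a b) (N2 a b) / jdet F1 F2 (N1 a b) (N2 a b)); auto.
        * intros a b Hab; destruct (HN a b Hab) as [_ [_ [_ [_ [_ [_ [D3 _]]]]]]].
          symmetry; apply is_derive_unique; exact D3.
        * apply Cqn, Sm_pu; auto.
      + apply Cn_ext with (fun a b => pu F1 (N1 a b) (N2 a b) / jdet F1 F2 (N1 a b) (N2 a b)); auto.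
        * intros a b Hab; destruct (HN a b Hab) as [_ [_ [_ [_ [_ [_ [_ D4]]]]]]].
          symmetry; apply is_derive_unique; exact D4.
        * apply Cq, Sm_pu; auto. }
  split; intro n; apply (G n).
Qed.

Lemma part1 : forall (D : R -> R -> Prop) (h : R -> R -> R),
    open2 D -> smooth_on D h ->
    (forall a b, D a b -> pu (pu h) a b * pv (pv h) a b <> 0) ->
  (forall (u v : R -> R -> R) (x0 t0 r : R),
     0 < r ->
     smooth_on (sq x0 t0 r) u -> smooth_on (sq x0 t0 r) v ->
     (forall x t, sq x0 t0 r x t ->
        D (u x t) (v x t) /\ solves_S h u v x t /\ nondeg h u v x t) ->
     exists (f : R -> R -> R) (rf : R),
       0 < rf /\
       (forall a b, sq (u x0 t0) (v x0 t0) rf a b -> D a b) /\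
       smooth_on (sq (u x0 t0) (v x0 t0) rf) f /\
       (forall a b, sq (u x0 t0) (v x0 t0) rf a b -> lin_pde h f a b) /\
       exists e, 0 < e /\
         forall x t, sq x0 t0 e x t ->
           sq (u x0 t0) (v x0 t0) rf (u x t) (v x t) /\
           hodo h f x t (u x t) (v x t)).
Proof.
  intros D h HD Hh Hnz u v x0 t0 r Hr Hu Hv Hsys.
  set (T := sq x0 t0 r). assert (HT : open2 T) by apply open2_sq.
  assert (Su : Sm T u) by (intro n; apply smooth_Cn, Hu).
  assert (Sv : Sm T v) by (intro n; apply smooth_Cn, Hv).
  assert (Tp : T x0 t0) by (apply sq_center; exact Hr).
  destruct (Hsys x0 t0 Tp) as [Dp [Sp Np]].
  assert (Hj : jdet u v x0 t0 <> 0).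
  { unfold jdet. destruct Sp as [_ [_ [_ [_ [S1 S2]]]]]. unfold nondeg in Np.
    change (pv u x0 t0 = pv (pu h) (u x0 t0) (v x0 t0) * pu u x0 t0 + pv (pv h) (u x0 t0) (v x0 t0) * pu v x0 t0) in S1.
    change (pv v x0 t0 = pu (pu h) (u x0 t0) (v x0 t0) * pu u x0 t0 + pv (pu h) (u x0 t0) (v x0 t0) * pu v x0 t0) in S2.
    change (pu (pu h) (u x0 t0) (v x0 t0) * (pu u x0 t0) ^ 2 - pv (pv h) (u x0 t0) (v x0 t0) * (pu v x0 t0) ^ 2 <> 0) in Np.
    rewrite S1, S2. intro Z. apply Np. rewrite <- Z. ring. }
  destruct (ift_full u v x0 t0 r Hr (Su 1%nat) (Sv 1%nat) Hj)
    as [rho [sig [X [Tm [Hrho [Hrr [Hsig [Inj [Jnz Main]]]]]]]]].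
  set (u0 := u x0 t0) in *. set (v0 := v x0 t0) in *.
  set (E := sq x0 t0 rho). assert (HE : open2 E) by apply open2_sq.
  assert (HET : forall a b, E a b -> T a b) by (intros a b Hab; apply (sq_mono x0 t0 rho); [lra|exact Hab]).
  set (V := sq u0 v0 sig). assert (HV : open2 V) by apply open2_sq.
  destruct (inv_smooth u v X Tm E V HE HV (Sm_sub _ _ _ HET Su) (Sm_sub _ _ _ HET Sv)) as [SX ST].
  { intros a b Hab. destruct (Main a b Hab) as [M1 [_ [_ [C1 [C2 [D1 [D2 [D3 D4]]]]]]]].
    exact (conj M1 (conj (Jnz _ _ M1) (conj C1 (conj C2 (conj D1 (conj D2 (conj D3 D4))))))). }
  destruct (HD u0 v0 Dp) as [eD [HeD HsD]].
  set (rf := Rmin sig eD). assert (R1 := Rmin_l sig eD). assert (R2 := Rmin_r sig eD).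
  fold rf in R1, R2.
  assert (Hrf : 0 < rf) by (apply Rmin_glb_lt; assumption).
  set (W := sq u0 v0 rf). assert (HW : open2 W) by apply open2_sq.
  assert (HWV : forall a b, W a b -> V a b) by (intros a b Hab; apply (sq_mono u0 v0 rf); [lra|exact Hab]).
  assert (HWD : forall a b, W a b -> D a b) by (intros a b Hab; apply HsD, (sq_mono u0 v0 rf); [lra|exact Hab]).
  assert (Hs : Sm W h) by (apply (Sm_sub D W h HWD); intro n; apply smooth_Cn, Hh).
  assert (SXW := Sm_sub _ _ _ HWV SX). assert (STW := Sm_sub _ _ _ HWV ST).
  assert (Pt : forall a b, W a b ->
     pu X a b = pv v (X a b) (Tm a b) / jdet u v (X a b) (Tm a b) /\
     pv X a b = - pv u (X a b) (Tm a b) / jdet u v (X a b) (Tm a b) /\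
     pu Tm a b = - pu v (X a b) (Tm a b) / jdet u v (X a b) (Tm a b) /\
     pv Tm a b = pu u (X a b) (Tm a b) / jdet u v (X a b) (Tm a b) /\
     jdet u v (X a b) (Tm a b) <> 0 /\
     pv u (X a b) (Tm a b) = pv (pu h) a b * pu u (X a b) (Tm a b) + pv (pv h) a b * pu v (X a b) (Tm a b) /\
     pv v (X a b) (Tm a b) = pu (pu h) a b * pu u (X a b) (Tm a b) + pv (pu h) a b * pu v (X a b) (Tm a b)).
  { intros a b Hab. destruct (Main a b (HWV a b Hab)) as [M1 [E1 [E2 [_ [_ [D1 [D2 [D3 D4]]]]]]]].
    destruct (Hsys (X a b) (Tm a b) (HET _ _ M1)) as [_ [SS _]].
    destruct SS as [_ [_ [_ [_ [S1 S2]]]]]. rewrite E1, E2 in S1, S2.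
    split; [apply is_derive_unique; exact D1|].
    split; [apply is_derive_unique; exact D2|].
    split; [apply is_derive_unique; exact D3|].
    split; [apply is_derive_unique; exact D4|].
    split; [apply Jnz, M1|split; [exact S1|exact S2]]. }
  assert (PX := Sm_parts _ _ SXW). assert (PT := Sm_parts _ _ STW).
  assert (Phuu := Sm_parts _ _ (Sm_pu _ _ (Sm_pu _ _ Hs))).
  assert (Phuv := Sm_parts _ _ (Sm_pv _ _ (Sm_pu _ _ Hs))).
  assert (Phvv := Sm_parts _ _ (Sm_pv _ _ (Sm_pv _ _ Hs))).
  set (p1 := fun a b => Tm a b * pu (pu h) a b).
  set (q1 := fun a b => X a b + Tm a b * pv (pu h) a b).
  set (q2 := fun a b => Tm a b * pv (pv h) a b).
  assert (Sp1 : Sm W p1) by (apply Sm_mult; auto; do 2 apply Sm_pu; auto).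
  assert (Sq1 : Sm W q1) by (apply Sm_plus; auto; apply Sm_mult; auto; apply Sm_pv, Sm_pu; auto).
  assert (Sq2 : Sm W q2) by (apply Sm_mult; auto; do 2 apply Sm_pv; auto).
  assert (Cl1 : forall a b, W a b -> pv p1 a b = pu q1 a b).
  { intros a b Hab. unfold p1, q1.
    rewrite pv_mult by (first [exact (proj2 (PT a b Hab))|exact (proj2 (Phuu a b Hab))]).
    rewrite (pu_plus X (fun a b => Tm a b * pv (pu h) a b)).
    2: exact (proj1 (PX a b Hab)).
    2: apply ex_derive_Rmult; [exact (proj1 (PT a b Hab))|exact (proj1 (Phuv a b Hab))].
    rewrite pu_mult.
    2: exact (proj1 (PT a b Hab)). 2: exact (proj1 (Phuv a b Hab)).
    rewrite (schw W (pu h) HW (Sm_pu _ _ Hs) a b Hab).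
    destruct (Pt a b Hab) as [A1 [A2 [A3 [A4 [A5 [A6 A7]]]]]].
    rewrite A1, A3, A4. rewrite A7. field. exact A5. }
  assert (Cl2 : forall a b, W a b -> pv q1 a b = pu q2 a b).
  { intros a b Hab. unfold q1, q2.
    rewrite pu_mult by (first [exact (proj1 (PT a b Hab))|exact (proj1 (Phvv a b Hab))]).
    rewrite (pv_plus X (fun a b => Tm a b * pv (pu h) a b)).
    2: exact (proj2 (PX a b Hab)).
    2: apply ex_derive_Rmult; [exact (proj2 (PT a b Hab))|exact (proj2 (Phuv a b Hab))].
    rewrite pv_mult.
    2: exact (proj2 (PT a b Hab)). 2: exact (proj2 (Phuv a b Hab)).
    rewrite (pv_ext W (pv (pu h)) (pu (pv h)) HW) by
      (first [exact Hab|intros x y Hxy; symmetry; apply (schw W h HW Hs x y Hxy)]).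
    rewrite <- (schw W (pv h) HW (Sm_pv _ _ Hs) a b Hab).
    destruct (Pt a b Hab) as [A1 [A2 [A3 [A4 [A5 [A6 A7]]]]]].
    rewrite A2, A3, A4. rewrite A6. field. exact A5. }
  assert (Hrf' : 0 < rf) by exact Hrf.
  destruct (poincare u0 v0 rf p1 q1 Hrf' Sp1 Sq1 Cl1) as [chi [Schi Echi]].
  destruct (poincare u0 v0 rf q1 q2 Hrf' Sq1 Sq2 Cl2) as [phi [Sphi Ephi]].
  assert (Cl3 : forall a b, W a b -> pv chi a b = pu phi a b).
  { intros a b Hab. rewrite (proj2 (Echi a b Hab)). rewrite (proj1 (Ephi a b Hab)). reflexivity. }
  destruct (poincare u0 v0 rf chi phi Hrf' Schi Sphi Cl3) as [f [Sf Ef]].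
  assert (Fuv : forall a b, W a b -> pv (pu f) a b = q1 a b).
  { intros a b Hab. rewrite (pv_ext W (pu f) chi HW) by
      (first [exact Hab|intros x y Hxy; exact (proj1 (Ef x y Hxy))]).
    exact (proj2 (Echi a b Hab)). }
  assert (Fvv : forall a b, W a b -> pv (pv f) a b = q2 a b).
  { intros a b Hab. rewrite (pv_ext W (pv f) phi HW) by
      (first [exact Hab|intros x y Hxy; exact (proj2 (Ef x y Hxy))]).
    exact (proj2 (Ephi a b Hab)). }
  assert (Fuu : forall a b, W a b -> pu (pu f) a b = p1 a b).
  { intros a b Hab. rewrite (pu_ext W (pu f) chi HW) by
      (first [exact Hab|intros x y Hxy; exact (proj1 (Ef x y Hxy))]).
    exact (proj1 (Echi a b Hab)). }
  exists f, rf. split; [exact Hrf|split; [exact HWD|split; [apply Cn_smooth, Sf|split]]].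
  - intros a b Hab. unfold lin_pde. rewrite (Fvv a b Hab), (Fuu a b Hab). unfold p1, q2. ring.
  -
    destruct (Cn_cont 0 _ _ (Su 0%nat) x0 t0 Tp (mkposreal rf Hrf)) as [d1 Hd1].
    destruct (Cn_cont 0 _ _ (Sv 0%nat) x0 t0 Tp (mkposreal rf Hrf)) as [d2 Hd2].
    exists (Rmin rho (Rmin d1 d2)). split.
    { apply Rmin_glb_lt; [exact Hrho|apply Rmin_glb_lt; apply cond_pos]. }
    intros x t [Hx Ht].
    assert (m1 := Rmin_l rho (Rmin d1 d2)); assert (m2 := Rmin_r rho (Rmin d1 d2)).
    assert (m3 := Rmin_l d1 d2); assert (m4 := Rmin_r d1 d2).
    assert (Wxt : W (u x t) (v x t)).
    { split; [apply (Hd1 x t)|apply (Hd2 x t)]; lra. }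
    split; [exact Wxt|].
    assert (Ext : E x t) by (split; lra).
    destruct (Main _ _ (HWV _ _ Wxt)) as [M1 [E1 [E2 _]]].
    destruct (Inj _ _ _ _ M1 Ext E1 E2) as [Ix It].
    split.
    + rewrite (Fuv _ _ Wxt). unfold q1. rewrite Ix, It. reflexivity.
    + rewrite (Fvv _ _ Wxt). unfold q2. rewrite It. reflexivity.
Qed.

Theorem mainTheorem1 :
  forall (D : R -> R -> Prop) (h : R -> R -> R),
    open2 D -> smooth_on D h ->
    (forall a b, D a b -> pu (pu h) a b * pv (pv h) a b <> 0) ->
  (* Part (1) *)
  (forall (u v : R -> R -> R) (x0 t0 r : R),
     0 < r ->
     smooth_on (sq x0 t0 r) u -> smooth_on (sq x0 t0 r) v ->
     (forall x t, sq x0 t0 r x t ->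
        D (u x t) (v x t) /\ solves_S h u v x t /\ nondeg h u v x t) ->
     exists (f : R -> R -> R) (rf : R),
       0 < rf /\
       (forall a b, sq (u x0 t0) (v x0 t0) rf a b -> D a b) /\
       smooth_on (sq (u x0 t0) (v x0 t0) rf) f /\
       (forall a b, sq (u x0 t0) (v x0 t0) rf a b -> lin_pde h f a b) /\
       exists e, 0 < e /\
         forall x t, sq x0 t0 e x t ->
           sq (u x0 t0) (v x0 t0) rf (u x t) (v x t) /\
           hodo h f x t (u x t) (v x t))
  /\
  (* Part (2) *)
  (forall (f : R -> R -> R) (u0 v0 r x0 t0 : R),
     0 < r ->
     (forall a b, sq u0 v0 r a b -> D a b) ->
     smooth_on (sq u0 v0 r) f ->
     (forall a b, sq u0 v0 r a b -> lin_pde h f a b) ->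
     hodo h f x0 t0 u0 v0 ->
     (t0 * pu (pu (pv h)) u0 v0 - pu (pu (pv f)) u0 v0)
       * (t0 * pv (pv (pv h)) u0 v0 - pv (pv (pv f)) u0 v0)
     - (t0 * pu (pv (pv h)) u0 v0 - pu (pv (pv f)) u0 v0) ^ 2 <> 0 ->
     exists (e d : R) (u v : R -> R -> R),
       0 < e /\ 0 < d /\ d <= r /\
       u x0 t0 = u0 /\ v x0 t0 = v0 /\
       forall x t, sq x0 t0 e x t ->
         sq u0 v0 d (u x t) (v x t) /\
         hodo h f x t (u x t) (v x t) /\
         (forall a b, sq u0 v0 d a b -> hodo h f x t a b ->
            a = u x t /\ b = v x t) /\
         solves_S h u v x t).

Proof.
  intros D h HD Hh Hnz. split.
  - exact (part1 D h HD Hh Hnz).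
  - exact (part2 D h HD Hh Hnz).
Qed.
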